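(* Let $A$ be a bounded linear operator on a complex Hilbert space $\mathcal H\neq\{0\}$. Then $W_0(A)\cap\partial W(A)\neq\emptyset$ if and only if $A$ is normaloid.
   Context: The numerical range of $A$ is $W(A)=\{\langle Ax,x\rangle : x\in\mathcal H,\ \|x\|=1\}$, and $\partial W(A)$ denotes its boundary in $\mathbb C$. The maximal numerical range $W_0(A)$ is the set of all $\lambda\in\mathbb C$ for which there exist unit vectors $x_n\in\mathcal H$ with $\|Ax_n\|\to\|A\|$ and $\langle Ax_n,x_n\rangle\to\lambda$. The operator $A$ is called normaloid if $\sigma(A)\cap\mathcal C_A\neq\emptyset$, where $\sigma(A)$ is the spectrum and $\mathcal C_A=\{z\in\mathbb C: |z|=\|A\|\}$; equivalently, if the closure of $W(A)$ meets $\mathcal C_A$, i.e. the numerical radius $\sup\{|z|: z\in W(A)\}$ equals $\|A\|$. *)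

(* Defs.v *)
From Stdlib Require Import Reals Lra.
Open Scope R_scope.

Record C := mkC { Re : R ; Im : R }.

Definition RtoC (r : R) : C := mkC r 0.
Definition C0 : C := mkC 0 0.
Definition C1 : C := mkC 1 0.
Definition Cadd (z w : C) : C := mkC (Re z + Re w) (Im z + Im w).
Definition Copp (z : C) : C := mkC (- Re z) (- Im z).
Definition Csub (z w : C) : C := Cadd z (Copp w).
Definition Cmul (z w : C) : C :=
  mkC (Re z * Re w - Im z * Im w) (Re z * Im w + Im z * Re w).
Definition Cconj (z : C) : C := mkC (Re z) (- Im z).
Definition Cmod (z : C) : R := sqrt (Re z * Re z + Im z * Im z).

Record HilbertSpace := {
  carrier :> Type;
  vadd : carrier -> carrier -> carrier;
  vzero : carrier;
  vopp : carrier -> carrier;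
  vscal : C -> carrier -> carrier;
  inner : carrier -> carrier -> C;
  vadd_assoc : forall x y z, vadd x (vadd y z) = vadd (vadd x y) z;
  vadd_comm : forall x y, vadd x y = vadd y x;
  vadd_zero : forall x, vadd x vzero = x;
  vadd_opp : forall x, vadd x (vopp x) = vzero;
  vscal_one : forall x, vscal C1 x = x;
  vscal_assoc : forall a b x, vscal a (vscal b x) = vscal (Cmul a b) x;
  vscal_distr_v : forall a x y, vscal a (vadd x y) = vadd (vscal a x) (vscal a y);
  vscal_distr_s : forall a b x, vscal (Cadd a b) x = vadd (vscal a x) (vscal b x);
  inner_add_l : forall x y z, inner (vadd x y) z = Cadd (inner x z) (inner y z);
  inner_scal_l : forall a x y, inner (vscal a x) y = Cmul a (inner x y);
  inner_conj_sym : forall x y, inner y x = Cconj (inner x y);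
  inner_pos : forall x, x <> vzero -> 0 < Re (inner x x);
  complete : forall u : nat -> carrier,
    (forall eps, 0 < eps -> exists N, forall n m, (n >= N)%nat -> (m >= N)%nat ->
        sqrt (Re (inner (vadd (u n) (vopp (u m))) (vadd (u n) (vopp (u m))))) < eps) ->
    exists l, forall eps, 0 < eps -> exists N, forall n, (n >= N)%nat ->
        sqrt (Re (inner (vadd (u n) (vopp l)) (vadd (u n) (vopp l)))) < eps
}.

Arguments vadd {h}. Arguments vzero {h}. Arguments vopp {h}.
Arguments vscal {h}. Arguments inner {h}.

Definition vnorm {H : HilbertSpace} (x : H) : R := sqrt (Re (inner x x)).

Definition bounded_linear {H : HilbertSpace} (A : H -> H) : Prop :=
  (forall x y, A (vadd x y) = vadd (A x) (A y)) /\
  (forall a x, A (vscal a x) = vscal a (A x)) /\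
  (exists M, forall x, vnorm (A x) <= M * vnorm x).

Definition is_opnorm {H : HilbertSpace} (A : H -> H) (r : R) : Prop :=
  is_lub (fun t => exists x : H, vnorm x = 1 /\ t = vnorm (A x)) r.

Definition numrange {H : HilbertSpace} (A : H -> H) (z : C) : Prop :=
  exists x : H, vnorm x = 1 /\ z = inner (A x) x.

Definition boundary (S : C -> Prop) (z : C) : Prop :=
  forall eps, 0 < eps ->
    (exists w, S w /\ Cmod (Csub w z) < eps) /\
    (exists w, ~ S w /\ Cmod (Csub w z) < eps).

Definition maxnumrange {H : HilbertSpace} (A : H -> H) (nA : R) (lam : C) : Prop :=
  exists x : nat -> H,
    (forall n, vnorm (x n) = 1) /\
    Un_cv (fun n => vnorm (A (x n))) nA /\
    Un_cv (fun n => Cmod (Csub (inner (A (x n)) (x n)) lam)) 0.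

Definition spectrum {H : HilbertSpace} (A : H -> H) (lam : C) : Prop :=
  ~ exists B : H -> H, bounded_linear B /\
      (forall x, B (vadd (A x) (vopp (vscal lam x))) = x) /\
      (forall x, vadd (A (B x)) (vopp (vscal lam (B x))) = x).

Definition normaloid {H : HilbertSpace} (A : H -> H) (nA : R) : Prop :=
  exists lam, spectrum A lam /\ Cmod lam = nA.

(* Main.v *)
Require Import Defs.
From Stdlib Require Import Reals Lra Lia Psatz Classical ClassicalEpsilon Nsatz.
Import Defs.
Open Scope R_scope.
Arguments vadd_assoc {h}. Arguments vadd_comm {h}. Arguments vadd_zero {h}. Arguments vadd_opp {h}.
Arguments vscal_one {h}. Arguments vscal_assoc {h}. Arguments vscal_distr_v {h}. Arguments vscal_distr_s {h}.
Arguments inner_add_l {h}. Arguments inner_scal_l {h}. Arguments inner_conj_sym {h}. Arguments inner_pos {h}.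

Lemma Ceq : forall z w : C, Re z = Re w -> Im z = Im w -> z = w.
Proof. intros [a b] [c d]; simpl; intros -> ->; reflexivity. Qed.

Ltac cring := apply Ceq; simpl; ring.

Lemma sqrt_le_of_sq : forall x y, 0 <= y -> x <= y * y -> sqrt x <= y.
Proof.
  intros x y Hy Hx. destruct (Rle_dec x 0) as [H|H].
  - rewrite sqrt_neg_0 by lra. lra.
  - rewrite <- (sqrt_square y) by lra. apply sqrt_le_1; nra.
Qed.

Lemma sq_le_sqrt : forall x y, 0 <= y -> y * y <= x -> y <= sqrt x.
Proof.
  intros x y Hy Hx. rewrite <- (sqrt_square y) by lra. apply sqrt_le_1; nra.
Qed.

Lemma sqrt_sq_id : forall x, 0 <= x -> sqrt x * sqrt x = x.
Proof. intros; apply sqrt_sqrt; auto. Qed.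

Lemma Cmod_ge0 : forall z, 0 <= Cmod z.
Proof. intros; unfold Cmod; apply sqrt_pos. Qed.

Lemma Cmod_sq : forall z, Cmod z * Cmod z = Re z * Re z + Im z * Im z.
Proof. intros; unfold Cmod; apply sqrt_sqrt; nra. Qed.

Lemma Cmod_le_sq : forall z b, 0 <= b -> Re z * Re z + Im z * Im z <= b * b -> Cmod z <= b.
Proof. intros; unfold Cmod; apply sqrt_le_of_sq; auto. Qed.

Lemma Cmod_ge_sq : forall z b, 0 <= b -> b * b <= Re z * Re z + Im z * Im z -> b <= Cmod z.
Proof. intros; unfold Cmod; apply sq_le_sqrt; auto. Qed.

Lemma sq_le_abs : forall x y, 0 <= y -> x * x <= y * y -> x <= y.
Proof. intros; nra. Qed.

Lemma abs_le_of_sq : forall x y, 0 <= x -> 0 <= y -> x * x <= y * y -> x <= y.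
Proof. intros; nra. Qed.

Lemma Cmod_mul : forall z w, Cmod (Cmul z w) = Cmod z * Cmod w.
Proof.
  intros. apply Rle_antisym.
  - apply Cmod_le_sq. apply Rmult_le_pos; apply Cmod_ge0.
    replace (Cmod z * Cmod w * (Cmod z * Cmod w)) with ((Cmod z * Cmod z) * (Cmod w * Cmod w)) by ring.
    rewrite !Cmod_sq. simpl. nra.
  - apply Cmod_ge_sq. apply Rmult_le_pos; apply Cmod_ge0.
    replace (Cmod z * Cmod w * (Cmod z * Cmod w)) with ((Cmod z * Cmod z) * (Cmod w * Cmod w)) by ring.
    rewrite !Cmod_sq. simpl. nra.
Qed.

Lemma Cmod_add : forall z w, Cmod (Cadd z w) <= Cmod z + Cmod w.
Proof.
  intros. apply Cmod_le_sq. pose proof (Cmod_ge0 z); pose proof (Cmod_ge0 w); lra.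
  simpl. pose proof (Cmod_sq z); pose proof (Cmod_sq w).
  pose proof (Cmod_ge0 z); pose proof (Cmod_ge0 w).
  assert (Re z * Re w + Im z * Im w <= Cmod z * Cmod w).
  { apply sq_le_abs. apply Rmult_le_pos; auto.
    replace (Cmod z * Cmod w * (Cmod z * Cmod w)) with ((Cmod z * Cmod z) * (Cmod w * Cmod w)) by ring.
    rewrite H, H0. pose proof (pow2_ge_0 (Re z*Im w - Im z*Re w)). nra. }
  nra.
Qed.

Lemma Rabs_sq : forall x, Rabs x * Rabs x = x * x.
Proof. intros. rewrite <- Rabs_mult. apply Rabs_pos_eq. nra. Qed.

Lemma Re_le_Cmod : forall z, Rabs (Re z) <= Cmod z.
Proof. intros. apply abs_le_of_sq. apply Rabs_pos. apply Cmod_ge0.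
  rewrite Cmod_sq, Rabs_sq. nra. Qed.

Lemma Im_le_Cmod : forall z, Rabs (Im z) <= Cmod z.
Proof. intros. apply abs_le_of_sq. apply Rabs_pos. apply Cmod_ge0.
  rewrite Cmod_sq, Rabs_sq. nra. Qed.

Lemma Re_le_Cmod' : forall z, Re z <= Cmod z.
Proof. intros. pose proof (Re_le_Cmod z). pose proof (Rle_abs (Re z)). lra. Qed.

Lemma Cmod_conj : forall z, Cmod (Cconj z) = Cmod z.
Proof. intros; unfold Cmod; simpl; f_equal; ring. Qed.

Lemma Cmod_opp : forall z, Cmod (Copp z) = Cmod z.
Proof. intros; unfold Cmod; simpl; f_equal; ring. Qed.

Lemma Cmod_RtoC : forall r, Cmod (RtoC r) = Rabs r.
Proof. intros; unfold Cmod; simpl. replace (r * r + 0 * 0) with (Rabs r * Rabs r) by (rewrite Rabs_sq; ring).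
  apply sqrt_square. apply Rabs_pos. Qed.

Lemma Cmod_eq0 : forall z, Cmod z = 0 -> z = C0.
Proof. intros z H. pose proof (Cmod_sq z). rewrite H in H0. apply Ceq; simpl; nra. Qed.

Lemma Cmod_C0 : Cmod C0 = 0.
Proof. unfold Cmod; simpl. replace (0*0+0*0) with 0 by ring. apply sqrt_0. Qed.

Lemma Cmod_sub_sym : forall z w, Cmod (Csub z w) = Cmod (Csub w z).
Proof. intros; unfold Cmod; simpl; f_equal; ring. Qed.

Lemma Cmod_sub_tri : forall z w v, Cmod (Csub z w) <= Cmod (Csub z v) + Cmod (Csub v w).
Proof. intros. replace (Csub z w) with (Cadd (Csub z v) (Csub v w)) by cring. apply Cmod_add. Qed.

Lemma Cmod_rev_tri : forall z w, Cmod z - Cmod w <= Cmod (Csub z w).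
Proof. intros. pose proof (Cmod_add (Csub z w) w). replace (Cadd (Csub z w) w) with z in H by cring. lra. Qed.

Lemma Cmod_scal : forall r z, Cmod (Cmul (RtoC r) z) = Rabs r * Cmod z.
Proof. intros; rewrite Cmod_mul, Cmod_RtoC; auto. Qed.

Lemma Cmod_C1 : Cmod C1 = 1.
Proof. unfold C1. change (mkC 1 0) with (RtoC 1). rewrite Cmod_RtoC. apply Rabs_R1. Qed.

Definition vsub {H : HilbertSpace} (x y : H) : H := vadd x (vopp y).
Definition ns {H : HilbertSpace} (x : H) : R := Re (inner x x).

Lemma vadd_cancel_l {H : HilbertSpace} : forall x y z : H, vadd x y = vadd x z -> y = z.
Proof.
  intros x y z E.
  assert (vadd (vopp x) (vadd x y) = vadd (vopp x) (vadd x z)) by (rewrite E; auto).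
  rewrite !vadd_assoc in H0. rewrite (vadd_comm (vopp x) x), vadd_opp in H0.
  rewrite (vadd_comm vzero y), (vadd_comm vzero z), !vadd_zero in H0. auto.
Qed.

Lemma vzero_add {H : HilbertSpace} : forall x : H, vadd vzero x = x.
Proof. intros; rewrite vadd_comm; apply vadd_zero. Qed.

Lemma vscal_C0 {H : HilbertSpace} : forall x : H, vscal C0 x = vzero.
Proof.
  intros. apply (vadd_cancel_l (vscal C0 x)). rewrite vadd_zero.
  rewrite <- vscal_distr_s. f_equal. cring.
Qed.

Lemma vopp_scal {H : HilbertSpace} : forall x : H, vopp x = vscal (Copp C1) x.
Proof.
  intros. apply (vadd_cancel_l x). rewrite vadd_opp.
  rewrite <- (vscal_one x) at 1. rewrite <- vscal_distr_s.
  replace (Cadd C1 (Copp C1)) with C0 by cring. rewrite vscal_C0. auto.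
Qed.

Lemma vscal_zero {H : HilbertSpace} : forall c, vscal c (@vzero H) = vzero.
Proof. intros. rewrite <- (vscal_C0 (@vzero H)) at 1. rewrite vscal_assoc.
  replace (Cmul c C0) with C0 by cring. apply vscal_C0. Qed.

Lemma inner_zero_l {H : HilbertSpace} : forall y : H, inner vzero y = C0.
Proof. intros. rewrite <- (vscal_C0 y). rewrite inner_scal_l. cring. Qed.

Lemma inner_zero_r {H : HilbertSpace} : forall y : H, inner y vzero = C0.
Proof. intros. rewrite inner_conj_sym, inner_zero_l. cring. Qed.

Lemma inner_add_r {H : HilbertSpace} : forall x y z : H, inner x (vadd y z) = Cadd (inner x y) (inner x z).
Proof. intros. rewrite inner_conj_sym, inner_add_l. rewrite (inner_conj_sym y x), (inner_conj_sym z x).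
  cring. Qed.

Lemma inner_scal_r {H : HilbertSpace} : forall a (x y : H), inner x (vscal a y) = Cmul (Cconj a) (inner x y).
Proof. intros. rewrite inner_conj_sym, inner_scal_l. rewrite (inner_conj_sym y x). cring. Qed.

Lemma inner_opp_l {H : HilbertSpace} : forall x y : H, inner (vopp x) y = Copp (inner x y).
Proof. intros. rewrite vopp_scal, inner_scal_l. cring. Qed.

Lemma inner_opp_r {H : HilbertSpace} : forall x y : H, inner x (vopp y) = Copp (inner x y).
Proof. intros. rewrite vopp_scal, inner_scal_r. cring. Qed.

Lemma inner_sub_l {H : HilbertSpace} : forall x y z : H, inner (vsub x y) z = Csub (inner x z) (inner y z).
Proof. intros. unfold vsub. rewrite inner_add_l, inner_opp_l. reflexivity. Qed.

Lemma inner_sub_r {H : HilbertSpace} : forall x y z : H, inner z (vsub x y) = Csub (inner z x) (inner z y).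
Proof. intros. unfold vsub. rewrite inner_add_r, inner_opp_r. reflexivity. Qed.

Lemma inner_self_Im {H : HilbertSpace} : forall x : H, Im (inner x x) = 0.
Proof. intros. pose proof (inner_conj_sym x x). 
  assert (Im (inner x x) = Im (Cconj (inner x x))) by (rewrite <- H0; auto). simpl in H1. lra. Qed.

Lemma inner_self_real {H : HilbertSpace} : forall x : H, inner x x = RtoC (ns x).
Proof. intros. apply Ceq; simpl. reflexivity. apply inner_self_Im. Qed.

Lemma ns_ge0 {H : HilbertSpace} : forall x : H, 0 <= ns x.
Proof. intros. unfold ns. destruct (classic (x = vzero)) as [->|N].
  rewrite inner_zero_l. simpl; lra. left; apply inner_pos; auto. Qed.

Lemma ns_eq0 {H : HilbertSpace} : forall x : H, ns x = 0 -> x = vzero.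
Proof. intros. destruct (classic (x = vzero)) as [|N]; auto. pose proof (inner_pos x N).
  unfold ns in H0. lra. Qed.

Lemma vnorm_sq {H : HilbertSpace} : forall x : H, vnorm x * vnorm x = ns x.
Proof. intros. unfold vnorm. apply sqrt_sqrt. apply ns_ge0. Qed.

Lemma vnorm_ge0 {H : HilbertSpace} : forall x : H, 0 <= vnorm x.
Proof. intros; apply sqrt_pos. Qed.

Lemma vnorm_eq0 {H : HilbertSpace} : forall x : H, vnorm x = 0 -> x = vzero.
Proof. intros. apply ns_eq0. rewrite <- vnorm_sq, H0. ring. Qed.

Lemma vnorm_zero {H : HilbertSpace} : vnorm (@vzero H) = 0.
Proof. unfold vnorm. rewrite inner_zero_l. simpl. apply sqrt_0. Qed.

Lemma ns_add {H : HilbertSpace} : forall x y : H,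
  ns (vadd x y) = ns x + 2 * Re (inner x y) + ns y.
Proof. intros. unfold ns. rewrite inner_add_l, !inner_add_r. rewrite (inner_conj_sym x y). simpl. ring. Qed.

Lemma ns_scal {H : HilbertSpace} : forall c (x : H), ns (vscal c x) = Cmod c * Cmod c * ns x.
Proof. intros. unfold ns. rewrite inner_scal_l, inner_scal_r. rewrite Cmod_sq.
  pose proof (inner_self_Im x). simpl. rewrite H0. ring. Qed.

Lemma vnorm_scal {H : HilbertSpace} : forall c (x : H), vnorm (vscal c x) = Cmod c * vnorm x.
Proof. intros. unfold vnorm. fold (ns (vscal c x)). rewrite ns_scal.
  rewrite sqrt_mult. rewrite sqrt_square by apply Cmod_ge0. auto.
  pose proof (Cmod_ge0 c); nra. apply ns_ge0. Qed.

Lemma vnorm_opp {H : HilbertSpace} : forall (x : H), vnorm (vopp x) = vnorm x.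
Proof. intros. rewrite vopp_scal, vnorm_scal, Cmod_opp, Cmod_C1. ring. Qed.

Lemma cauchy_schwarz {H : HilbertSpace} : forall x y : H, Cmod (inner x y) <= vnorm x * vnorm y.
Proof.
  intros. destruct (Req_dec (ns y) 0) as [E|E].
  - apply ns_eq0 in E. subst. rewrite inner_zero_r, Cmod_C0. 
    pose proof (vnorm_ge0 x); pose proof (vnorm_ge0 (@vzero H)); nra.
  - pose proof (ns_ge0 y). assert (Y : 0 < ns y) by lra.
    set (c := inner x y).
    set (k := mkC (- Re c / ns y) (- Im c / ns y)).
    pose proof (ns_ge0 (vadd x (vscal k y))).
    rewrite ns_add, ns_scal, inner_scal_r in H1. rewrite Cmod_sq in H1. fold c in H1.
    simpl in H1.
    apply Cmod_le_sq. apply Rmult_le_pos; apply vnorm_ge0.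
    replace (vnorm x * vnorm y * (vnorm x * vnorm y)) with (ns x * ns y) by (rewrite <- !vnorm_sq; ring).
    assert (E2 : ns x + 2 * (- Re c / ns y * Re c - - (- Im c / ns y) * Im c) +
    (- Re c / ns y * (- Re c / ns y) + - Im c / ns y * (- Im c / ns y)) * ns y
      = (ns x * ns y - (Re c * Re c + Im c * Im c)) / ns y) by (field; lra).
    rewrite E2 in H1. 
    assert (0 <= (ns x * ns y - (Re c * Re c + Im c * Im c)) / ns y * ns y) by (apply Rmult_le_pos; lra).
    replace ((ns x * ns y - (Re c * Re c + Im c * Im c)) / ns y * ns y) with (ns x * ns y - (Re c * Re c + Im c * Im c)) in H2 by (field; lra).
    lra.
Qed.

Lemma vnorm_add {H : HilbertSpace} : forall x y : H, vnorm (vadd x y) <= vnorm x + vnorm y.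
Proof.
  intros. unfold vnorm at 1. apply sqrt_le_of_sq. pose proof (vnorm_ge0 x); pose proof (vnorm_ge0 y); lra.
  fold (ns (vadd x y)). rewrite ns_add. rewrite <- !vnorm_sq.
  pose proof (cauchy_schwarz x y). pose proof (Re_le_Cmod' (inner x y)). nra.
Qed.

Lemma vnorm_sub_sym {H : HilbertSpace} : forall x y : H, vnorm (vsub x y) = vnorm (vsub y x).
Proof. intros. replace (vsub x y) with (vopp (vsub y x)). apply vnorm_opp.
  apply (vadd_cancel_l (vsub y x)). rewrite vadd_opp. unfold vsub.
  rewrite <- vadd_assoc. rewrite (vadd_assoc (vopp x) x), (vadd_comm (vopp x) x), vadd_opp, vzero_add, vadd_opp. auto. Qed.

Lemma vsub_tri {H : HilbertSpace} : forall x y z : H, vnorm (vsub x z) <= vnorm (vsub x y) + vnorm (vsub y z).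
Proof. intros. replace (vsub x z) with (vadd (vsub x y) (vsub y z)). apply vnorm_add.
  unfold vsub. rewrite <- !vadd_assoc. f_equal. rewrite vadd_assoc, (vadd_comm (vopp y) y), vadd_opp, vzero_add. auto. Qed.

Lemma vsub_eq {H : HilbertSpace} : forall x y : H, vsub x y = vzero -> x = y.
Proof. intros. unfold vsub in H0. apply (vadd_cancel_l (vopp y)). rewrite (vadd_comm _ y), vadd_opp.
  rewrite vadd_comm. auto. Qed.

Lemma vsub_self {H : HilbertSpace} : forall x : H, vsub x x = vzero.
Proof. intros; apply vadd_opp. Qed.

Lemma vnorm_rev {H : HilbertSpace} : forall x y : H, vnorm x - vnorm y <= vnorm (vsub x y).
Proof. intros. pose proof (vnorm_add (vsub x y) y). replace (vadd (vsub x y) y) with x in H0. lra.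
  unfold vsub. rewrite <- vadd_assoc, (vadd_comm (vopp y)), vadd_opp, vadd_zero. auto. Qed.

Lemma vnorm_sq_le {H : HilbertSpace} : forall (x : H) b, 0 <= b -> ns x <= b * b -> vnorm x <= b.
Proof. intros. apply sqrt_le_of_sq; auto. Qed.

Fixpoint iter_f {T : Type} (F : T -> T) (x0 : T) (n : nat) : T :=
  match n with O => x0 | S n' => F (iter_f F x0 n') end.

Lemma zero_of_small : forall r, 0 <= r -> (forall eps, 0 < eps -> r < eps) -> r = 0.
Proof. intros. destruct (Req_dec r 0); auto. assert (0 < r) by lra. specialize (H0 r H2). lra. Qed.

Lemma banach {H : HilbertSpace} (P : H -> Prop) (F : H -> H) (k : R) (x0 : H) :
  0 <= k < 1 -> P x0 -> (forall x, P x -> P (F x)) ->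
  (forall x y, P x -> P y -> vnorm (vsub (F x) (F y)) <= k * vnorm (vsub x y)) ->
  (forall (u : nat -> H) l, (forall n, P (u n)) ->
      (forall eps, 0 < eps -> exists N, forall n, (n >= N)%nat -> vnorm (vsub (u n) l) < eps) -> P l) ->
  exists l, P l /\ F l = l.
Proof.
  intros Hk HS0 HSF Hc Hcl.
  set (u := iter_f F x0).
  assert (HSu : forall n, P (u n)) by (intro n; unfold u; induction n; simpl; auto).
  set (d0 := vnorm (vsub (u 1%nat) (u 0%nat))).
  assert (Hd0 : 0 <= d0) by apply vnorm_ge0.
  assert (Hstep : forall n, vnorm (vsub (u (S n)) (u n)) <= d0 * k ^ n).
  { induction n. simpl. unfold d0. lra.
    change (u (S (S n))) with (F (u (S n))). change (u (S n)) with (F (u n)) at 2.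
    eapply Rle_trans. apply Hc; auto. simpl. change (F (u n)) with (u (S n)). nra. }
  assert (Hsum : forall n j, vnorm (vsub (u (n + j)%nat) (u n)) <= d0 * k ^ n * (1 - k ^ j) / (1 - k)).
  { intros n j. induction j.
    - rewrite Nat.add_0_r, vsub_self, vnorm_zero. simpl. replace (1 - 1) with 0 by ring.
      unfold Rdiv. rewrite Rmult_0_r, Rmult_0_l. lra.
    - eapply Rle_trans. apply (vsub_tri _ (u (n + j)%nat)).
      replace (n + S j)%nat with (S (n + j)) by lia.
      eapply Rle_trans. apply Rplus_le_compat. apply Hstep. apply IHj.
      rewrite pow_add. simpl. apply Req_le. field. lra. }
  assert (Hbound : forall n m, (m >= n)%nat -> vnorm (vsub (u m) (u n)) <= d0 * k ^ n / (1 - k)).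
  { intros n m Hm. replace m with (n + (m - n))%nat by lia. eapply Rle_trans. apply Hsum.
    assert (0 <= k ^ (m - n)) by (apply pow_le; lra). assert (0 <= k ^ n) by (apply pow_le; lra).
    apply Rmult_le_compat_r. left; apply Rinv_0_lt_compat; lra.
    assert (0 <= d0 * k ^ n * k ^ (m - n)) by (repeat apply Rmult_le_pos; lra). lra. }
  assert (Hpow : forall e, 0 < e -> exists N, forall n, (n >= N)%nat -> d0 * k ^ n / (1 - k) < e).
  { intros e He. destruct (pow_lt_1_zero k) with (y := e * (1 - k) / (d0 + 1)) as [N HN].
    rewrite Rabs_pos_eq; lra. apply Rdiv_lt_0_compat; nra.
    exists N. intros n Hn. specialize (HN n Hn). rewrite Rabs_pos_eq in HN by (apply pow_le; lra).
    apply Rmult_lt_reg_r with (r := (1 - k)). lra. unfold Rdiv. rewrite Rmult_assoc, Rinv_l, Rmult_1_r by lra.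
    apply Rmult_lt_compat_r with (r := d0 + 1) in HN; [|lra].
    unfold Rdiv in HN. rewrite Rmult_assoc, Rinv_l, Rmult_1_r in HN by lra.
    assert (0 <= k ^ n) by (apply pow_le; lra). nra. }
  destruct (complete H u) as [l Hl].
  { intros e He. destruct (Hpow e He) as [N HN]. exists N. intros n m Hn Hm.
    change (vnorm (vsub (u n) (u m)) < e).
    destruct (Nat.le_ge_cases n m).
    - rewrite vnorm_sub_sym. eapply Rle_lt_trans. apply Hbound. lia. apply HN; lia.
    - eapply Rle_lt_trans. apply Hbound. lia. apply HN; lia. }
  change (forall eps, 0 < eps -> exists N, forall n, (n >= N)%nat -> vnorm (vsub (u n) l) < eps) in Hl.
  assert (HSl : P l) by (apply (Hcl u); auto).
  exists l. split; auto.
  apply vsub_eq. apply vnorm_eq0. apply zero_of_small. apply vnorm_ge0.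
  intros e He. destruct (Hl (e / 2)) as [N HN]. lra.
  eapply Rle_lt_trans. apply (vsub_tri _ (F (u N))).
  assert (vnorm (vsub (F l) (F (u N))) <= k * vnorm (vsub l (u N))) by (apply Hc; auto).
  rewrite (vnorm_sub_sym l) in H0. specialize (HN N (le_n _)) as HN1.
  assert (HN2 := HN (S N) (le_S _ _ (le_n _))). change (u (S N)) with (F (u N)) in HN2.
  pose proof (vnorm_ge0 (vsub (u N) l)). nra.
Qed.

Lemma vadd_sub {H : HilbertSpace} : forall x y : H, vadd (vsub x y) y = x.
Proof. intros. unfold vsub. rewrite <- vadd_assoc, (vadd_comm (vopp y)), vadd_opp, vadd_zero. auto. Qed.

Lemma vsub_add {H : HilbertSpace} : forall x y : H, vsub (vadd x y) y = x.
Proof. intros. unfold vsub. rewrite <- vadd_assoc, vadd_opp, vadd_zero. auto. Qed.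

Lemma vsub_eq_iff {H : HilbertSpace} : forall x y z : H, vsub x y = z -> x = vadd z y.
Proof. intros. subst. rewrite vadd_sub. auto. Qed.

Lemma vsub_of_eq {H : HilbertSpace} : forall x y z : H, x = vadd z y -> vsub x y = z.
Proof. intros. subst. apply vsub_add. Qed.

Lemma vadd_swap {H : HilbertSpace} : forall a b c d : H, vadd (vadd a b) (vadd c d) = vadd (vadd a c) (vadd b d).
Proof. intros. rewrite !vadd_assoc. f_equal. rewrite <- !vadd_assoc. f_equal. apply vadd_comm. Qed.

Lemma vopp_add {H : HilbertSpace} : forall a b : H, vopp (vadd a b) = vadd (vopp a) (vopp b).
Proof. intros. rewrite !vopp_scal, vscal_distr_v. auto. Qed.

Lemma vsub_distr {H : HilbertSpace} : forall a b c d : H, vsub (vadd a b) (vadd c d) = vadd (vsub a c) (vsub b d).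
Proof. intros. unfold vsub. rewrite vopp_add. apply vadd_swap. Qed.

Lemma vopp_vsub {H : HilbertSpace} : forall x y : H, vopp (vsub x y) = vsub y x.
Proof. intros. apply (vadd_cancel_l (vsub x y)). rewrite vadd_opp. unfold vsub.
  rewrite <- vadd_assoc. rewrite (vadd_assoc (vopp y) y), (vadd_comm (vopp y) y), vadd_opp, vzero_add, vadd_opp. auto. Qed.

Lemma vsub_sub {H : HilbertSpace} : forall a b c d : H, vsub (vsub a b) (vsub c d) = vsub (vsub a c) (vsub b d).
Proof. intros. unfold vsub at 1. rewrite vopp_vsub. unfold vsub at 3. rewrite vopp_vsub.
  unfold vsub. rewrite (vadd_swap a). rewrite (vadd_swap a (vopp c)). f_equal. apply vadd_comm. Qed.

Lemma scal_sub {H : HilbertSpace} : forall c (x y : H), vscal c (vsub x y) = vsub (vscal c x) (vscal c y).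
Proof. intros. unfold vsub. rewrite vscal_distr_v, !vopp_scal, !vscal_assoc. f_equal. f_equal. cring. Qed.

Lemma sub_scal {H : HilbertSpace} : forall c d (x : H), vsub (vscal c x) (vscal d x) = vscal (Csub c d) x.
Proof. intros. unfold vsub, Csub. rewrite vscal_distr_s, vopp_scal, vscal_assoc. f_equal. f_equal. cring. Qed.

Lemma vsub_zero {H : HilbertSpace} : forall x : H, vsub x vzero = x.
Proof. intros. apply vsub_of_eq. rewrite vadd_zero. auto. Qed.

Lemma vscal_C1 {H : HilbertSpace} : forall x : H, vscal C1 x = x.
Proof. apply vscal_one. Qed.

Lemma lin_add {H : HilbertSpace} (A : H -> H) : bounded_linear A -> forall x y, A (vadd x y) = vadd (A x) (A y).
Proof. intros [h _]; auto. Qed.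

Lemma lin_scal {H : HilbertSpace} (A : H -> H) : bounded_linear A -> forall c x, A (vscal c x) = vscal c (A x).
Proof. intros [_ [h _]]; auto. Qed.

Lemma lin_zero {H : HilbertSpace} (A : H -> H) : bounded_linear A -> A vzero = vzero.
Proof. intros hA. transitivity (A (vscal C0 vzero)). rewrite vscal_C0; auto. rewrite (lin_scal A hA). apply vscal_C0. Qed.

Lemma lin_sub {H : HilbertSpace} (A : H -> H) : bounded_linear A -> forall x y, A (vsub x y) = vsub (A x) (A y).
Proof. intros hA x y. unfold vsub. rewrite lin_add, !vopp_scal, lin_scal; auto. Qed.

Lemma normalize_unit {H : HilbertSpace} : forall x : H, x <> vzero ->
  vnorm (vscal (RtoC (/ vnorm x)) x) = 1.
Proof. intros. rewrite vnorm_scal, Cmod_RtoC. assert (0 < vnorm x).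
  { destruct (vnorm_ge0 x); auto. symmetry in H1. apply vnorm_eq0 in H1. contradiction. }
  rewrite Rabs_pos_eq. field. lra. left; apply Rinv_0_lt_compat; auto. Qed.

Lemma vnorm_pos {H : HilbertSpace} : forall x : H, x <> vzero -> 0 < vnorm x.
Proof. intros. destruct (vnorm_ge0 x); auto. symmetry in H1. apply vnorm_eq0 in H1. contradiction. Qed.

Lemma unit_exists {H : HilbertSpace} : (exists x : H, x <> vzero) -> exists e : H, vnorm e = 1.
Proof. intros [x Hx]. exists (vscal (RtoC (/ vnorm x)) x). apply normalize_unit; auto. Qed.

Lemma opnorm_unit {H : HilbertSpace} (A : H -> H) a : is_opnorm A a -> forall x, vnorm x = 1 -> vnorm (A x) <= a.
Proof. intros [Hub _] x Hx. apply Hub. exists x. auto. Qed.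

Lemma opnorm_bound {H : HilbertSpace} (A : H -> H) a : bounded_linear A -> is_opnorm A a ->
  forall x, vnorm (A x) <= a * vnorm x.
Proof.
  intros hA hN x. destruct (classic (x = vzero)) as [->|N].
  - rewrite lin_zero, vnorm_zero by auto. lra.
  - pose proof (vnorm_pos x N).
    pose proof (opnorm_unit A a hN _ (normalize_unit x N)).
    rewrite lin_scal, vnorm_scal, Cmod_RtoC, Rabs_pos_eq in H1 by (auto; left; apply Rinv_0_lt_compat; auto).
    apply Rmult_le_compat_r with (r := vnorm x) in H1; [|lra].
    replace (/ vnorm x * vnorm (A x) * vnorm x) with (vnorm (A x)) in H1 by (field; lra). auto.
Qed.

Lemma opnorm_ge0 {H : HilbertSpace} (A : H -> H) a : (exists x : H, x <> vzero) -> is_opnorm A a -> 0 <= a.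
Proof. intros hx hN. destruct (unit_exists hx) as [e He]. pose proof (opnorm_unit A a hN e He).
  pose proof (vnorm_ge0 (A e)). lra. Qed.

Lemma numrange_bound {H : HilbertSpace} (A : H -> H) a : is_opnorm A a ->
  forall x, vnorm x = 1 -> Cmod (inner (A x) x) <= a.
Proof. intros hN x Hx. eapply Rle_trans. apply cauchy_schwarz. rewrite Hx, Rmult_1_r. apply (opnorm_unit A a hN x Hx). Qed.

Definition Tm {H : HilbertSpace} (A : H -> H) (mu : C) (x : H) : H := vsub (A x) (vscal mu x).

Lemma Tm_sub {H : HilbertSpace} (A : H -> H) mu : bounded_linear A ->
  forall x y, Tm A mu (vsub x y) = vsub (Tm A mu x) (Tm A mu y).
Proof. intros hA x y. unfold Tm. rewrite lin_sub, scal_sub by auto. apply vsub_sub. Qed.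

Lemma Tm_shift {H : HilbertSpace} (A : H -> H) mu lam : forall x,
  Tm A mu x = vsub (Tm A lam x) (vscal (Csub mu lam) x).
Proof. intros. unfold Tm. rewrite <- sub_scal. rewrite vsub_sub. rewrite vsub_self.
  rewrite vsub_zero. auto. Qed.

Lemma approx_eig_spectrum {H : HilbertSpace} (A : H -> H) mu :
  (forall eps, 0 < eps -> exists x : H, vnorm x = 1 /\ vnorm (Tm A mu x) < eps) ->
  spectrum A mu.
Proof.
  intros Hap [B [[_ [_ [M HM]]] [HB1 _]]].
  destruct (Hap (/ (Rabs M + 1))) as [x [Hx Hs]]. apply Rinv_0_lt_compat. pose proof (Rabs_pos M); lra.
  specialize (HB1 x). fold (vsub (A x) (vscal mu x)) in HB1. fold (Tm A mu x) in HB1.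
  specialize (HM (Tm A mu x)). rewrite HB1, Hx in HM.
  pose proof (Rle_abs M). pose proof (Rabs_pos M). pose proof (vnorm_ge0 (Tm A mu x)).
  assert (M * vnorm (Tm A mu x) <= (Rabs M) * / (Rabs M + 1)) by nra.
  assert (Rabs M * / (Rabs M + 1) < 1).
  { apply Rmult_lt_reg_r with (r := Rabs M + 1). lra. rewrite Rmult_assoc, Rinv_l by lra. lra. }
  lra.
Qed.

Lemma vsub_vsub_self {H : HilbertSpace} : forall x y : H, vsub x (vsub x y) = y.
Proof. intros. apply vsub_of_eq. rewrite vadd_comm. rewrite vadd_sub. auto. Qed.

Lemma Tm_add {H : HilbertSpace} (A : H -> H) mu : bounded_linear A ->
  forall x y, Tm A mu (vadd x y) = vadd (Tm A mu x) (Tm A mu y).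
Proof. intros hA x y. unfold Tm. rewrite lin_add, vscal_distr_v by auto. apply vsub_distr. Qed.

Lemma Tm_scal {H : HilbertSpace} (A : H -> H) mu : bounded_linear A ->
  forall c x, Tm A mu (vscal c x) = vscal c (Tm A mu x).
Proof. intros hA c x. unfold Tm. rewrite (lin_scal A hA). rewrite scal_sub. f_equal.
  rewrite !vscal_assoc. f_equal. cring. Qed.

Lemma Tm_zero {H : HilbertSpace} (A : H -> H) mu : bounded_linear A -> Tm A mu vzero = vzero.
Proof. intros hA. unfold Tm. rewrite lin_zero, vscal_zero by auto. apply vsub_self. Qed.

Definition Cinv (z : C) : C := mkC (Re z / (Re z * Re z + Im z * Im z)) (- Im z / (Re z * Re z + Im z * Im z)).

Lemma Cmod_pos_sq : forall z, 0 < Cmod z -> 0 < Re z * Re z + Im z * Im z.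
Proof. intros. rewrite <- Cmod_sq. nra. Qed.

Lemma Cinv_l : forall z, 0 < Cmod z -> Cmul (Cinv z) z = C1.
Proof. intros z Hz. pose proof (Cmod_pos_sq z Hz). apply Ceq; simpl; field; lra. Qed.

Lemma Cmod_Cinv : forall z, 0 < Cmod z -> Cmod (Cinv z) = / Cmod z.
Proof. intros z Hz. pose proof (Cinv_l z Hz). 
  assert (Cmod (Cmul (Cinv z) z) = 1) by (rewrite H; apply Cmod_C1).
  rewrite Cmod_mul in H0. field_simplify_eq; try lra. Qed.

Definition bbelow {H : HilbertSpace} (T : H -> H) (c : R) : Prop := forall x, c * vnorm x <= vnorm (T x).

Lemma resolvent_surj {H : HilbertSpace} (A : H -> H) a mu :
  bounded_linear A -> is_opnorm A a -> 0 <= a -> a < Cmod mu ->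
  forall y, exists x, Tm A mu x = y.
Proof.
  intros hA hN ha hmu y. assert (Hm : 0 < Cmod mu) by lra.
  set (ci := Cinv mu).
  destruct (banach (fun _ => True) (fun x => vscal ci (vsub (A x) y)) (a / Cmod mu) vzero) as [x [_ Hx]]; auto.
  - split. unfold Rdiv; apply Rmult_le_pos; [lra| left; apply Rinv_0_lt_compat; lra]. apply Rmult_lt_reg_r with (r := Cmod mu); auto.
    unfold Rdiv. rewrite Rmult_assoc, Rinv_l; lra.
  - intros x1 x2 _ _. rewrite <- scal_sub, vsub_sub, vsub_self, vsub_zero, <- lin_sub by auto.
    rewrite vnorm_scal. unfold ci. rewrite Cmod_Cinv by auto.
    pose proof (opnorm_bound A a hA hN (vsub x1 x2)).
    unfold Rdiv. rewrite Rmult_comm with (r1 := a), Rmult_assoc. apply Rmult_le_compat_l; auto.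
    left; apply Rinv_0_lt_compat; auto.
  - exists x. unfold Tm. rewrite <- Hx at 2. rewrite vscal_assoc.
    unfold ci. replace (Cmul mu (Cinv mu)) with C1 by (rewrite <- (Cinv_l mu Hm); cring).
    rewrite vscal_C1. apply vsub_vsub_self.
Qed.

Lemma right_inverse {H : HilbertSpace} (T : H -> H) c :
  0 < c -> bbelow T c -> (forall y, exists x, T x = y) ->
  exists R : H -> H, (forall y, T (R y) = y) /\ (forall y, vnorm (R y) <= vnorm y / c).
Proof.
  intros hc hb hs.
  exists (fun y => proj1_sig (constructive_indefinite_description _ (hs y))).
  split; intros y; destruct (constructive_indefinite_description _ (hs y)) as [x Hx]; simpl; auto.
  specialize (hb x). rewrite Hx in hb. apply Rmult_le_reg_l with (r := c); auto.
  replace (c * (vnorm y / c)) with (vnorm y) by (field; lra). auto.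
Qed.

Lemma Tm_bbelow_shift {H : HilbertSpace} (A : H -> H) lam mu c :
  bbelow (Tm A lam) c -> bbelow (Tm A mu) (c - Cmod (Csub mu lam)).
Proof. intros hb x. rewrite (Tm_shift A mu lam). eapply Rle_trans; [|apply vnorm_rev].
  rewrite vnorm_scal. specialize (hb x). lra. Qed.

Lemma bbelow_surj_resolvent {H : HilbertSpace} (A : H -> H) a lam c :
  bounded_linear A -> is_opnorm A a -> 0 < a -> Cmod lam = a -> 0 < c -> bbelow (Tm A lam) c ->
  forall y, exists x, Tm A lam x = y.
Proof.
  intros hA hN ha hl hc hb y.
  set (eta := c / (4 * a)).
  assert (Heta : 0 < eta) by (unfold eta; apply Rdiv_lt_0_compat; lra).
  set (mu := Cmul lam (RtoC (1 + eta))).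
  assert (Hd : Csub mu lam = Cmul lam (RtoC eta)) by (unfold mu; cring).
  assert (Hdm : Cmod (Csub mu lam) = c / 4).
  { rewrite Hd, Cmod_mul, Cmod_RtoC, Rabs_pos_eq, hl by lra. unfold eta. field. lra. }
  assert (Hmu : a < Cmod mu).
  { unfold mu. rewrite Cmod_mul, Cmod_RtoC, Rabs_pos_eq, hl by lra. nra. }
  assert (hbm : bbelow (Tm A mu) (3 * c / 4)).
  { pose proof (Tm_bbelow_shift A lam mu c hb). rewrite Hdm in H0. 
    replace (3 * c / 4) with (c - c / 4) by field. auto. }
  destruct (right_inverse (Tm A mu) (3 * c / 4)) as [R [HR1 HR2]]; auto. lra.
  { apply (resolvent_surj A a); auto; lra. }
  set (d := Csub mu lam).
  destruct (banach (fun _ => True) (fun x => R (vsub y (vscal d x))) (1/3) vzero) as [x [_ Hx]]; auto.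
  - lra.
  - intros x1 x2 _ _.
    assert (E : Tm A mu (vsub (R (vsub y (vscal d x1))) (R (vsub y (vscal d x2)))) = vscal d (vsub x2 x1)).
    { rewrite Tm_sub, !HR1 by auto. rewrite vsub_sub, vsub_self. unfold vsub at 1. rewrite vzero_add.
      rewrite vopp_vsub. rewrite scal_sub. auto. }
    pose proof (hbm (vsub (R (vsub y (vscal d x1))) (R (vsub y (vscal d x2))))).
    rewrite E, vnorm_scal, (vnorm_sub_sym x2) in H0. fold d in Hdm. rewrite Hdm in H0.
    pose proof (vnorm_ge0 (vsub x1 x2)). nra.
  - exists x. pose proof (HR1 (vsub y (vscal d x))). rewrite Hx in H0.
    rewrite (Tm_shift A mu lam) in H0. fold d in H0.
    apply vsub_eq_iff in H0. rewrite H0. apply vadd_sub.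
Qed.

Lemma bbelow_unit {H : HilbertSpace} (A : H -> H) lam c : bounded_linear A -> 0 <= c ->
  (forall x, vnorm x = 1 -> c <= vnorm (Tm A lam x)) -> bbelow (Tm A lam) c.
Proof.
  intros hA hc hu x. destruct (classic (x = vzero)) as [->|N].
  - rewrite vnorm_zero, Tm_zero by auto. rewrite vnorm_zero. lra.
  - pose proof (vnorm_pos x N). specialize (hu _ (normalize_unit x N)).
    rewrite Tm_scal, vnorm_scal, Cmod_RtoC, Rabs_pos_eq in hu by (auto; left; apply Rinv_0_lt_compat; auto).
    apply Rmult_le_compat_r with (r := vnorm x) in hu; [|lra].
    replace (/ vnorm x * vnorm (Tm A lam x) * vnorm x) with (vnorm (Tm A lam x)) in hu by (field; lra).
    lra.
Qed.

Lemma bbelow_inj {H : HilbertSpace} (A : H -> H) lam c : bounded_linear A -> 0 < c -> bbelow (Tm A lam) c ->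
  forall u v, Tm A lam u = Tm A lam v -> u = v.
Proof. intros hA hc hb u v E. apply vsub_eq. apply vnorm_eq0.
  specialize (hb (vsub u v)). rewrite Tm_sub, E, vsub_self, vnorm_zero in hb by auto.
  pose proof (vnorm_ge0 (vsub u v)). nra. Qed.

Lemma spectrum_approx {H : HilbertSpace} (A : H -> H) a lam :
  (exists x : H, x <> vzero) -> bounded_linear A -> is_opnorm A a -> spectrum A lam -> Cmod lam = a ->
  forall eps, 0 < eps -> exists x : H, vnorm x = 1 /\ vnorm (Tm A lam x) < eps.
Proof.
  intros hne hA hN hsp hl eps heps. apply NNPP. intros Hno.
  assert (hu : forall x, vnorm x = 1 -> eps <= vnorm (Tm A lam x)).
  { intros x Hx. apply Rnot_lt_le. intros Hlt. apply Hno. exists x; auto. }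
  assert (hb : bbelow (Tm A lam) eps) by (apply bbelow_unit; auto; lra).
  pose proof (opnorm_ge0 A a hne hN) as ha.
  destruct (Req_dec a 0) as [Ha0|Ha0].
  - destruct (unit_exists hne) as [e He]. specialize (hu e He).
    assert (lam = C0) by (apply Cmod_eq0; lra). subst lam.
    unfold Tm in hu. rewrite vscal_C0 in hu. unfold vsub in hu. rewrite vopp_scal, vscal_zero, vadd_zero in hu.
    pose proof (opnorm_bound A a hA hN e). rewrite Ha0, He in H0. lra.
  - assert (hs : forall y, exists x, Tm A lam x = y) by (apply (bbelow_surj_resolvent A a lam eps); auto; lra).
    destruct (right_inverse (Tm A lam) eps heps hb hs) as [B [HB1 HB2]].
    apply hsp. exists B. split; [split; [|split]|split].
    + intros x y. apply (bbelow_inj A lam eps); auto. rewrite Tm_add, !HB1 by auto. auto.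
    + intros c x. apply (bbelow_inj A lam eps); auto. rewrite Tm_scal, !HB1 by auto. auto.
    + exists (/ eps). intros x. rewrite Rmult_comm. apply HB2.
    + intros x. apply (bbelow_inj A lam eps); auto.
    + intros x. apply HB1.
Qed.

Lemma inv_small : forall eps, 0 < eps -> exists N : nat, forall n, (n >= N)%nat -> / (INR n + 1) < eps.
Proof.
  intros eps He. destruct (INR_unbounded (/ eps)) as [N HN]. exists N. intros n Hn.
  apply le_INR in Hn. pose proof (pos_INR N). pose proof (Rinv_0_lt_compat _ He).
  assert (Hl : / eps < INR n + 1) by lra.
  apply Rinv_lt_contravar in Hl. rewrite Rinv_inv in Hl. auto.
  apply Rmult_lt_0_compat; lra.
Qed.

Lemma inv_pos_n : forall n, 0 < / (INR n + 1).
Proof. intros. apply Rinv_0_lt_compat. pose proof (pos_INR n). lra. Qed.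

Lemma inner_Tm {H : HilbertSpace} (A : H -> H) lam x : vnorm x = 1 ->
  inner (Tm A lam x) x = Csub (inner (A x) x) lam.
Proof. intros Hx. unfold Tm. rewrite inner_sub_l, inner_scal_l, inner_self_real.
  assert (ns x = 1) by (rewrite <- vnorm_sq, Hx; ring). rewrite H0. f_equal. cring. Qed.

Lemma approx_W0_bd {H : HilbertSpace} (A : H -> H) a lam :
  bounded_linear A -> is_opnorm A a -> 0 <= a -> Cmod lam = a ->
  (forall eps, 0 < eps -> exists x : H, vnorm x = 1 /\ vnorm (Tm A lam x) < eps) ->
  maxnumrange A a lam /\ boundary (numrange A) lam.
Proof.
  intros hA hN ha hl hap.
  assert (Hclose : forall x, vnorm x = 1 ->
     Rabs (vnorm (A x) - a) <= vnorm (Tm A lam x) /\ Cmod (Csub (inner (A x) x) lam) <= vnorm (Tm A lam x)).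
  { intros x Hx. split.
    - assert (vnorm (vscal lam x) = a) by (rewrite vnorm_scal, Hx, hl; ring).
      apply Rabs_le. split.
      + pose proof (vnorm_rev (vscal lam x) (A x)). rewrite vnorm_sub_sym in H1. unfold Tm. lra.
      + pose proof (vnorm_rev (A x) (vscal lam x)). unfold Tm. lra.
    - rewrite <- inner_Tm by auto. eapply Rle_trans. apply cauchy_schwarz. rewrite Hx. lra. }
  split.
  - set (xs := fun n : nat => proj1_sig (constructive_indefinite_description _
                 (hap (/ (INR n + 1)) (inv_pos_n n)))).
    assert (Hxs : forall n, vnorm (xs n) = 1 /\ vnorm (Tm A lam (xs n)) < / (INR n + 1)).
    { intros n. unfold xs. destruct (constructive_indefinite_description _ _) as [x Hx]. simpl. auto. }
    exists xs. split; [|split].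
    + intros n; apply Hxs.
    + intros e He. destruct (inv_small e He) as [N HN]. exists N. intros n Hn. unfold Rdist.
      destruct (Hxs n). destruct (Hclose _ H0). specialize (HN n Hn). lra.
    + intros e He. destruct (inv_small e He) as [N HN]. exists N. intros n Hn. unfold Rdist.
      destruct (Hxs n). destruct (Hclose _ H0). specialize (HN n Hn). rewrite Rminus_0_r, Rabs_pos_eq by apply Cmod_ge0. lra.
  - intros e He. split.
    + destruct (hap e He) as [x [Hx Hs]]. exists (inner (A x) x). split. exists x; auto.
      destruct (Hclose x Hx). lra.
    + set (w := if Req_EM_T a 0 then RtoC (e / 2) else Cmul lam (RtoC (1 + e / (2 * a)))).
      assert (Hw : Cmod w = a + e / 2 /\ Cmod (Csub w lam) = e / 2).
      { unfold w. destruct (Req_EM_T a 0) as [Ha|Ha].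
        - assert (lam = C0) by (apply Cmod_eq0; lra). subst. rewrite Cmod_RtoC, Rabs_pos_eq by lra. split. lra.
          replace (Csub (RtoC (e / 2)) C0) with (RtoC (e / 2)) by cring. rewrite Cmod_RtoC, Rabs_pos_eq; lra.
        - assert (0 < a) by lra. split.
          + rewrite Cmod_mul, Cmod_RtoC, Rabs_pos_eq, hl. field. lra.
            assert (0 < e / (2 * a)) by (apply Rdiv_lt_0_compat; lra). lra.
          + replace (Csub (Cmul lam (RtoC (1 + e / (2 * a)))) lam) with (Cmul lam (RtoC (e / (2 * a)))) by cring.
            rewrite Cmod_mul, Cmod_RtoC, Rabs_pos_eq, hl. field. lra.
            left. apply Rdiv_lt_0_compat; lra. }
      exists w. split.
      * intros [x [Hx Hwx]]. pose proof (numrange_bound A a hN x Hx). rewrite <- Hwx in H0. lra.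
      * lra.
Qed.

Definition Cinner (z w : C) : C := Cmul z (Cconj w).

Lemma Cinner_pos : forall z : C, z <> C0 -> 0 < Re (Cinner z z).
Proof. intros z Hz. unfold Cinner; simpl.
  destruct (Req_dec (Re z) 0); destruct (Req_dec (Im z) 0).
  - exfalso; apply Hz; apply Ceq; simpl; auto.
  - nra. - nra. - nra. Qed.

Lemma CH_norm : forall z : C, sqrt (Re (Cinner z z)) = Cmod z.
Proof. intros. unfold Cmod, Cinner. simpl. f_equal. ring. Qed.

Lemma CH_complete : forall u : nat -> C,
    (forall eps, 0 < eps -> exists N, forall n m, (n >= N)%nat -> (m >= N)%nat ->
        sqrt (Re (Cinner (Cadd (u n) (Copp (u m))) (Cadd (u n) (Copp (u m))))) < eps) ->
    exists l, forall eps, 0 < eps -> exists N, forall n, (n >= N)%nat ->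
        sqrt (Re (Cinner (Cadd (u n) (Copp l)) (Cadd (u n) (Copp l)))) < eps.
Proof.
  intros u Hc.
  assert (Hre : Cauchy_crit (fun n => Re (u n))).
  { intros e He. destruct (Hc e He) as [N HN]. exists N. intros n m Hn Hm. specialize (HN n m Hn Hm).
    rewrite CH_norm in HN. unfold Rdist. pose proof (Re_le_Cmod (Cadd (u n) (Copp (u m)))). simpl in H. unfold Rminus. lra. }
  assert (Him : Cauchy_crit (fun n => Im (u n))).
  { intros e He. destruct (Hc e He) as [N HN]. exists N. intros n m Hn Hm. specialize (HN n m Hn Hm).
    rewrite CH_norm in HN. unfold Rdist. pose proof (Im_le_Cmod (Cadd (u n) (Copp (u m)))). simpl in H. unfold Rminus. lra. }
  destruct (R_complete _ Hre) as [lr Hlr]. destruct (R_complete _ Him) as [li Hli].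
  exists (mkC lr li). intros e He.
  destruct (Hlr (e/2)) as [N1 H1]. lra. destruct (Hli (e/2)) as [N2 H2]. lra.
  exists (max N1 N2). intros n Hn. rewrite CH_norm.
  specialize (H1 n ltac:(lia)). specialize (H2 n ltac:(lia)). unfold Rdist in H1, H2.
  apply Rle_lt_trans with (Rabs (Re (u n) - lr) + Rabs (Im (u n) - li)); [|lra].
  apply Cmod_le_sq. pose proof (Rabs_pos (Re (u n) - lr)); pose proof (Rabs_pos (Im (u n) - li)); lra.
  simpl. pose proof (Rabs_pos (Re (u n) - lr)); pose proof (Rabs_pos (Im (u n) - li)).
  replace ((Re (u n) + - lr) * (Re (u n) + - lr) + (Im (u n) + - li) * (Im (u n) + - li)) with
    (Rabs (Re (u n) - lr) * Rabs (Re (u n) - lr) + Rabs (Im (u n) - li) * Rabs (Im (u n) - li))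
    by (rewrite !Rabs_sq; ring). nra.
Qed.

Definition CH : HilbertSpace.
Proof.
  refine {| carrier := C; vadd := Cadd; vzero := C0; vopp := Copp; vscal := Cmul; inner := Cinner;
            complete := CH_complete |}; intros; try (apply Cinner_pos; auto; fail); unfold Cinner; cring.
Defined.

Lemma CH_vnorm : forall z : CH, vnorm z = Cmod z.
Proof. intros. unfold vnorm. apply CH_norm. Qed.

Lemma CH_vsub : forall z w : CH, vsub z w = Csub z w.
Proof. reflexivity. Qed.

Lemma banach_C (P : C -> Prop) (F : C -> C) (k : R) (x0 : C) :
  0 <= k < 1 -> P x0 -> (forall x, P x -> P (F x)) ->
  (forall x y, P x -> P y -> Cmod (Csub (F x) (F y)) <= k * Cmod (Csub x y)) ->
  (forall (u : nat -> C) l, (forall n, P (u n)) ->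
      (forall eps, 0 < eps -> exists N, forall n, (n >= N)%nat -> Cmod (Csub (u n) l) < eps) -> P l) ->
  exists l, P l /\ F l = l.
Proof.
  intros. apply (@banach CH P F k x0); auto.
  - intros x y Hx Hy. rewrite !CH_vnorm, !CH_vsub. auto.
  - intros u l Hu Hl. apply (H3 u l Hu). intros e He. destruct (Hl e He) as [N HN]. exists N.
    intros n Hn. specialize (HN n Hn). rewrite CH_vnorm, CH_vsub in HN. auto.
Qed.

Definition gmap (s : R) (u t : C) : C := Cadd (Cmul (Cconj t) (RtoC s)) (Cmul t u).
Definition ginv (s : R) (u v : C) : C :=
  Cmul (RtoC (/ (Cmod u * Cmod u - s * s))) (Csub (Cmul (Cconj u) v) (Cmul (RtoC s) (Cconj v))).
Definition sq (t : C) : R := Cmod t * Cmod t.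
Definition mm (t : C) : R := sq t / (1 + sq t).

Lemma sq_ge0 : forall t, 0 <= sq t.
Proof. intros; unfold sq; pose proof (Cmod_ge0 t); nra. Qed.

Lemma g_ginv : forall s u v, Cmod u * Cmod u - s * s <> 0 -> gmap s u (ginv s u v) = v.
Proof. intros s u v Hn. unfold gmap, ginv. rewrite Cmod_sq in *. apply Ceq; simpl; field; auto. Qed.

Lemma ginv_sub : forall s u v1 v2, Csub (ginv s u v1) (ginv s u v2) = ginv s u (Csub v1 v2).
Proof. intros. unfold ginv. cring. Qed.

Lemma gmap_sub : forall s u t1 t2, Csub (gmap s u t1) (gmap s u t2) = gmap s u (Csub t1 t2).
Proof. intros. unfold gmap. cring. Qed.

Lemma gmap_bound : forall s u t, 0 <= s -> Cmod (gmap s u t) <= (s + Cmod u) * Cmod t.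
Proof. intros. unfold gmap. eapply Rle_trans. apply Cmod_add. rewrite !Cmod_mul, Cmod_conj, Cmod_RtoC, Rabs_pos_eq by auto. lra. Qed.

Lemma ginv_bound : forall s u v d, 0 <= s -> 0 < d -> d <= Rabs (s - Cmod u) -> Cmod (ginv s u v) <= Cmod v / d.
Proof.
  intros s u v d hs hd hdu. unfold ginv. rewrite Cmod_mul, Cmod_RtoC.
  pose proof (Cmod_ge0 u). pose proof (Cmod_ge0 v).
  assert (Hb : Cmod (Csub (Cmul (Cconj u) v) (Cmul (RtoC s) (Cconj v))) <= (Cmod u + s) * Cmod v).
  { unfold Csub. eapply Rle_trans. apply Cmod_add. rewrite Cmod_opp, !Cmod_mul, Cmod_conj, Cmod_RtoC, Cmod_conj, Rabs_pos_eq by auto. lra. }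
  assert (Hpos : 0 < Cmod u + s).
  { destruct (Rle_dec s (Cmod u)); [rewrite Rabs_minus_sym, Rabs_pos_eq in hdu by lra|rewrite Rabs_pos_eq in hdu by lra]; lra. }
  assert (Hfac : Rabs (Cmod u * Cmod u - s * s) = Rabs (s - Cmod u) * (Cmod u + s)).
  { replace (Cmod u * Cmod u - s * s) with ((Cmod u - s) * (Cmod u + s)) by ring.
    rewrite Rabs_mult, (Rabs_pos_eq (Cmod u + s)) by lra. rewrite Rabs_minus_sym. auto. }
  assert (Hne : Cmod u * Cmod u - s * s <> 0).
  { intro E. rewrite E, Rabs_R0 in Hfac. nra. }
  rewrite Rabs_inv, Hfac.
  apply Rle_trans with (/ (Rabs (s - Cmod u) * (Cmod u + s)) * ((Cmod u + s) * Cmod v)).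
  apply Rmult_le_compat_l; auto. left; apply Rinv_0_lt_compat; nra.
  replace (/ (Rabs (s - Cmod u) * (Cmod u + s)) * ((Cmod u + s) * Cmod v)) with (Cmod v / Rabs (s - Cmod u)) by (field; split; lra).
  unfold Rdiv. apply Rmult_le_compat_l; auto. apply Rinv_le_contravar; lra.
Qed.

Lemma mm_bounds : forall t, 0 <= mm t <= sq t.
Proof. intros. unfold mm. pose proof (sq_ge0 t). split.
  unfold Rdiv; apply Rmult_le_pos; [lra|left; apply Rinv_0_lt_compat; lra].
  apply Rmult_le_reg_r with (r := 1 + sq t). lra. unfold Rdiv. rewrite Rmult_assoc, Rinv_l by lra. nra. Qed.

Lemma mm_lip : forall t1 t2, Rabs (mm t1 - mm t2) <= (Cmod t1 + Cmod t2) * Cmod (Csub t1 t2).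
Proof.
  intros. unfold mm, sq. pose proof (Cmod_ge0 t1). pose proof (Cmod_ge0 t2).
  set (x := Cmod t1) in *. set (y := Cmod t2) in *.
  assert (E : x * x / (1 + x * x) - y * y / (1 + y * y) = (x - y) * (x + y) / ((1 + x*x) * (1 + y * y))) by (field; nra).
  rewrite E. unfold Rdiv. rewrite Rabs_mult, Rabs_mult, (Rabs_pos_eq (x + y)) by lra.
  rewrite Rabs_inv, (Rabs_pos_eq ((1 + x*x) * (1 + y*y))) by nra.
  assert (Rabs (x - y) <= Cmod (Csub t1 t2)).
  { apply Rabs_le. pose proof (Cmod_rev_tri t1 t2). pose proof (Cmod_rev_tri t2 t1). rewrite Cmod_sub_sym in H2. fold x y in H1, H2. lra. }
  assert (/ ((1 + x * x) * (1 + y * y)) <= 1).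
  { rewrite <- Rinv_1. apply Rinv_le_contravar. lra. nra. }
  assert (0 <= / ((1 + x * x) * (1 + y * y))) by (left; apply Rinv_0_lt_compat; nra).
  pose proof (Rabs_pos (x - y)). 
  apply Rle_trans with (Rabs (x - y) * (x + y) * 1). apply Rmult_le_compat_l; [apply Rmult_le_pos; lra | auto].
  rewrite Rmult_1_r. rewrite Rmult_comm. apply Rmult_le_compat_l; lra.
Qed.

Definition Emap (s : R) (u D t : C) : C := Cmul (RtoC (mm t)) (Csub D (gmap s u t)).

Lemma Emap_lip : forall a s u D r0 t1 t2, 0 < a -> 0 <= s <= a -> Cmod u <= a -> Cmod D <= 2 * a -> 0 <= r0 <= 1 ->
  Cmod t1 <= r0 -> Cmod t2 <= r0 ->
  Cmod (Csub (Emap s u D t1) (Emap s u D t2)) <= 10 * a * r0 * Cmod (Csub t1 t2).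
Proof.
  intros a s u D r0 t1 t2 ha hs hu hD hr h1 h2.
  assert (E : Csub (Emap s u D t1) (Emap s u D t2) =
     Cadd (Cmul (RtoC (mm t1 - mm t2)) (Csub D (gmap s u t1))) (Cmul (RtoC (mm t2)) (Csub (gmap s u t2) (gmap s u t1)))).
  { unfold Emap. cring. }
  rewrite E. eapply Rle_trans. apply Cmod_add. rewrite !Cmod_mul, !Cmod_RtoC.
  rewrite gmap_sub. 
  pose proof (gmap_bound s u (Csub t2 t1) (proj1 hs)). rewrite Cmod_sub_sym in H.
  pose proof (gmap_bound s u t1 (proj1 hs)).
  assert (HD1 : Cmod (Csub D (gmap s u t1)) <= 4 * a).
  { unfold Csub. eapply Rle_trans. apply Cmod_add. rewrite Cmod_opp. pose proof (Cmod_ge0 t1). nra. }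
  pose proof (mm_lip t1 t2). pose proof (mm_bounds t2). rewrite Rabs_pos_eq with (x := mm t2) by lra.
  pose proof (Cmod_ge0 (Csub t1 t2)). pose proof (Cmod_ge0 t1). pose proof (Cmod_ge0 t2). pose proof (Cmod_ge0 u).
  pose proof (Rabs_pos (mm t1 - mm t2)). pose proof (Cmod_ge0 (Csub D (gmap s u t1))).
  assert (T1 : Rabs (mm t1 - mm t2) * Cmod (Csub D (gmap s u t1)) <= (2 * r0 * Cmod (Csub t1 t2)) * (4 * a)).
  { apply Rmult_le_compat; auto. nra. }
  assert (Hsq : sq t2 <= r0) by (unfold sq; nra).
  assert (T2 : mm t2 * Cmod (gmap s u (Csub t2 t1)) <= r0 * (2 * a * Cmod (Csub t1 t2))).
  { apply Rmult_le_compat; try lra. apply Cmod_ge0. nra. }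
  nra.
Qed.

Lemma closed_ball : forall (r0 : R) (u : nat -> C) l, (forall n, Cmod (u n) <= r0) ->
  (forall eps, 0 < eps -> exists N, forall n, (n >= N)%nat -> Cmod (Csub (u n) l) < eps) -> Cmod l <= r0.
Proof.
  intros r0 u l Hu Hl. apply Rnot_lt_le. intros Hlt. destruct (Hl (Cmod l - r0)) as [N HN]. lra.
  specialize (HN N (le_n _)). pose proof (Cmod_rev_tri l (u N)). rewrite Cmod_sub_sym in HN. specialize (Hu N). lra.
Qed.

Lemma fp_algebra : forall g D z m, 0 <= m -> g = Csub z (Cmul (RtoC (m / (1 + m))) (Csub D g)) ->
  Cadd g (Cmul (RtoC m) D) = Cmul z (RtoC (1 + m)).
Proof.
  intros g D z m hm G. set (k := m / (1 + m)) in *.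
  assert (K1 : k * (1 + m) = m) by (unfold k; field; lra).
  assert (K2 : (1 + m) * (1 - k) = 1) by (unfold k; field; lra).
  assert (GR := f_equal Re G). assert (GI := f_equal Im G). simpl in GR, GI.
  apply Ceq; simpl; nsatz.
Qed.

Lemma interior_C : forall a s u d p dl zeta, 0 < a -> 0 <= s <= a -> Cmod u <= a -> Cmod d <= a -> Cmod p <= a ->
  0 < dl -> dl <= Rabs (s - Cmod u) ->
  Cmod zeta <= dl * Rmin 1 (dl / (20 * a)) / 2 ->
  exists t, Cadd (gmap s u t) (Cmul (RtoC (sq t)) (Csub d p)) = Cmul zeta (RtoC (1 + sq t)).
Proof.
  intros a s u d p dl zeta ha hs hu hd hp hdl hdu hz.
  set (r0 := Rmin 1 (dl / (20 * a))) in *.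
  assert (hr0 : 0 < r0 <= 1 /\ r0 <= dl / (20 * a)).
  { unfold r0. assert (0 < dl / (20 * a)) by (apply Rdiv_lt_0_compat; lra).
    split; [split|]. apply Rmin_glb_lt; lra. apply Rmin_l. apply Rmin_r. }
  assert (h10 : 10 * a * r0 <= dl / 2).
  { destruct hr0 as [_ H]. apply Rmult_le_compat_l with (r := 10 * a) in H; [|lra].
    replace (10 * a * (dl / (20 * a))) with (dl / 2) in H by (field; lra). lra. }
  set (D := Csub d p).
  assert (hD : Cmod D <= 2 * a) by (unfold D, Csub; eapply Rle_trans; [apply Cmod_add|rewrite Cmod_opp; lra]).
  assert (hne : Cmod u * Cmod u - s * s <> 0).
  { intro E. assert (Cmod u = s) by (pose proof (Cmod_ge0 u); nra). rewrite H, Rminus_diag, Rabs_R0 in hdu. lra. }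
  destruct (banach_C (fun t => Cmod t <= r0) (fun t => ginv s u (Csub zeta (Emap s u D t))) (1/2) C0) as [t [_ Ht]].
  - lra.
  - rewrite Cmod_C0; lra.
  - intros t Ht. eapply Rle_trans. apply ginv_bound; eauto. lra.
    assert (Cmod (Emap s u D t) <= 10 * a * r0 * Cmod t).
    { pose proof (Emap_lip a s u D r0 t C0 ha hs hu hD ltac:(lra) Ht ltac:(rewrite Cmod_C0; lra)).
      assert (M0 : mm C0 = 0) by (unfold mm, sq; rewrite Cmod_C0; field).
      replace (Emap s u D C0) with C0 in H by (unfold Emap; rewrite M0; cring).
      replace (Csub (Emap s u D t) C0) with (Emap s u D t) in H by cring.
      replace (Csub t C0) with t in H by cring. auto. }
    assert (Cmod (Csub zeta (Emap s u D t)) <= dl * r0 / 2 + dl / 2 * r0).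
    { unfold Csub. eapply Rle_trans. apply Cmod_add. rewrite Cmod_opp. pose proof (Cmod_ge0 t). nra. }
    apply Rmult_le_reg_r with (r := dl). auto. unfold Rdiv. rewrite Rmult_assoc, Rinv_l by lra. lra.
  - intros t1 t2 h1 h2. rewrite ginv_sub.
    replace (Csub (Csub zeta (Emap s u D t1)) (Csub zeta (Emap s u D t2))) with (Csub (Emap s u D t2) (Emap s u D t1)) by cring.
    eapply Rle_trans. apply ginv_bound; eauto. lra.
    pose proof (Emap_lip a s u D r0 t2 t1 ha hs hu hD ltac:(lra) h2 h1). rewrite Cmod_sub_sym with (z := t2) in H.
    pose proof (Cmod_ge0 (Csub t1 t2)).
    apply Rmult_le_reg_r with (r := dl). auto. unfold Rdiv. rewrite Rmult_assoc, Rinv_l by lra. nra.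
  - intros u0 l Hu Hl. eapply closed_ball; eauto.
  - exists t. assert (G : gmap s u t = Csub zeta (Emap s u D t)) by (rewrite <- Ht at 1; apply g_ginv; auto).
    unfold Emap in G. apply fp_algebra; auto. apply sq_ge0.
Qed.

Lemma csqrt_unit : forall w, Cmod w = 1 -> exists z, Cmod z = 1 /\ Cmul z z = w.
Proof.
  intros w hw. pose proof (Cmod_sq w) as hw2. rewrite hw in hw2.
  destruct (Req_dec (Cmod (Cadd C1 w)) 0) as [E|E].
  - apply Cmod_eq0 in E. assert (ER := f_equal Re E). assert (EI := f_equal Im E). simpl in ER, EI.
    exists (mkC 0 1). split.
    + unfold Cmod; simpl. replace (0 * 0 + 1 * 1) with 1 by ring. apply sqrt_1.
    + apply Ceq; simpl; lra.
  - set (n := Cmod (Cadd C1 w)) in *. pose proof (Cmod_ge0 (Cadd C1 w)). fold n in H.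
    pose proof (Cmod_sq (Cadd C1 w)) as hn. fold n in hn. simpl in hn.
    exists (Cmul (RtoC (/ n)) (Cadd C1 w)). split.
    + rewrite Cmod_mul, Cmod_RtoC. fold n. rewrite Rabs_pos_eq. field. auto. left; apply Rinv_0_lt_compat; lra.
    + set (k := / n). assert (hk : k * n = 1) by (unfold k; field; auto). clearbody k. clearbody n.
      assert (hk2 : k * k * (2 + 2 * Re w) = 1).
      { replace (2 + 2 * Re w) with (n * n) by nra. replace (k * k * (n * n)) with ((k * n) * (k * n)) by ring. rewrite hk. ring. }
      assert (hwi : Im w * Im w = 1 - Re w * Re w) by lra.
      apply Ceq; simpl.
      * replace ((k * (1 + Re w) - 0 * (0 + Im w)) * (k * (1 + Re w) - 0 * (0 + Im w)) -
          (k * (0 + Im w) + 0 * (1 + Re w)) * (k * (0 + Im w) + 0 * (1 + Re w))) with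
          (k * k * ((1 + Re w) * (1 + Re w) - Im w * Im w)) by ring. rewrite hwi.
        replace ((1 + Re w) * (1 + Re w) - (1 - Re w * Re w)) with (Re w * (2 + 2 * Re w)) by ring.
        replace (k * k * (Re w * (2 + 2 * Re w))) with (Re w * (k * k * (2 + 2 * Re w))) by ring. rewrite hk2. ring.
      * replace ((k * (1 + Re w) - 0 * (0 + Im w)) * (k * (0 + Im w) + 0 * (1 + Re w)) +
          (k * (0 + Im w) + 0 * (1 + Re w)) * (k * (1 + Re w) - 0 * (0 + Im w))) with
          (Im w * (k * k * (2 + 2 * Re w))) by ring. rewrite hk2. ring.
Qed.

Definition numf (p : C) (s : R) (u d t : C) : C := Cadd (Cadd p (gmap s u t)) (Cmul (RtoC (sq t)) d).

Lemma sqrt_sum_le : forall x y, 0 <= x -> 0 <= y -> sqrt (x * x + y * y) <= x + y.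
Proof. intros. apply sqrt_le_of_sq; nra. Qed.

Lemma degen_C : forall a kap sig s p u d,
  0 < a -> 0 < sig -> sig <= s -> Cmod p <= a -> 0 <= kap ->
  Cmod (Cadd (Cmul p (Cconj u)) (Cmul (RtoC s) (Cconj d))) <= a * kap ->
  exists tau, (1 + sq tau) * (sqrt (Cmod p * Cmod p + s * s) - Rabs (s - Cmod u) - a * (Rabs (s - Cmod u) + kap) / sig)
    <= Cmod (numf p s u d tau).
Proof.
  intros a kap sig s p u d ha hsig hs hp hk hY.
  pose proof (Cmod_ge0 p). pose proof (Cmod_ge0 u).
  assert (hfrac : 0 <= a * (Rabs (s - Cmod u) + kap) / sig).
  { unfold Rdiv. apply Rmult_le_pos. apply Rmult_le_pos. lra. pose proof (Rabs_pos (s - Cmod u)). lra.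
    left; apply Rinv_0_lt_compat; lra. }
  destruct (Req_dec (Cmod u) 0) as [U0|U0].
  - exists C0. unfold numf, sq, gmap. rewrite Cmod_C0.
    replace (Cadd (Cadd p (Cadd (Cmul (Cconj C0) (RtoC s)) (Cmul C0 u))) (Cmul (RtoC (0 * 0)) d)) with p by cring.
    rewrite U0 in hfrac |- *. rewrite Rminus_0_r, Rabs_pos_eq in hfrac |- * by lra.
    pose proof (sqrt_sum_le (Cmod p) s H ltac:(lra)). lra.
  - set (cu := Cmod u) in *. assert (hcu : 0 < cu) by lra.
    set (w := Cmul (RtoC (/ cu)) u).
    assert (hw : Cmod w = 1) by (unfold w; rewrite Cmod_mul, Cmod_RtoC, Rabs_pos_eq; fold cu; [field|left; apply Rinv_0_lt_compat]; lra).
    destruct (csqrt_unit w hw) as [z [hz hzz]].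
    assert (hz2 : Re z * Re z + Im z * Im z = 1) by (rewrite <- Cmod_sq, hz; ring).
    assert (hu : u = Cmul (RtoC cu) (Cmul z z)) by (rewrite hzz; unfold w; apply Ceq; simpl; field; lra).
    set (q := Cmul (Cconj z) p).
    assert (hq : Cmod q = Cmod p) by (unfold q; rewrite Cmod_mul, Cmod_conj, hz; ring).
    set (al := Re q). set (be := Im q).
    assert (hq2 : al * al + be * be = Cmod p * Cmod p) by (rewrite <- hq, Cmod_sq; auto).
    set (R0 := sqrt (al * al + s * s)).
    assert (hR0 : R0 * R0 = al * al + s * s) by (unfold R0; apply sqrt_sqrt; nra).
    assert (hR0p : 0 <= R0) by apply sqrt_pos.
    assert (hRa : 0 < R0 + al).
    { destruct (Rle_dec 0 al). nra. assert (R0 > - al) by nra. lra. }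
    set (r := s / (R0 + al)).
    assert (hr : 0 < r) by (unfold r; apply Rdiv_lt_0_compat; lra).
    assert (hrR : r * (R0 + al) = s) by (unfold r; field; lra).
    set (tau := Cmul (RtoC r) (Cconj z)).
    assert (hsq : sq tau = r * r) by (unfold sq, tau; rewrite Cmod_mul, Cmod_RtoC, Cmod_conj, hz, Rabs_pos_eq; lra).
    exists tau.
    set (Y := Cadd (Cmul p (Cconj u)) (Cmul (RtoC s) (Cconj d))) in *.
    set (I := Cadd (Csub q (Cmul (RtoC (r * r)) (Cconj q))) (RtoC (2 * r * s))).
    set (Df := Cadd (Csub (RtoC (s * r * (cu - s))) (Cmul (RtoC (r * r * (cu - s))) (Cconj q)))
                    (Cmul (RtoC (r * r)) (Cmul (Cconj z) (Cconj Y)))).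
    assert (Key : Cmul (RtoC s) (Cmul (Cconj z) (numf p s u d tau)) = Cadd (Cmul (RtoC s) I) Df).
    { unfold numf, gmap. rewrite hsq. unfold Df, I, Y, q, tau. rewrite hu.
      clear - hz2. apply Ceq; simpl; nsatz. }
    set (S := sqrt (Cmod p * Cmod p + s * s)).
    assert (hS : S * S = Cmod p * Cmod p + s * s) by (unfold S; apply sqrt_sqrt; nra).
    assert (hS0 : 0 <= S) by apply sqrt_pos.
    assert (hReI : Re I = R0 * (1 + r * r)).
    { assert (E1 : Re I = al - r * r * al + 2 * r * s) by (unfold I, al; simpl; ring).
      rewrite E1. clearbody r R0 al. clear - hR0 hrR hRa.
      apply Rmult_eq_reg_r with (r := (R0 + al) * (R0 + al)). 2: nra.
      assert (E : (al - r * r * al + 2 * r * s) * ((R0 + al) * (R0 + al)) - R0 * (1 + r * r) * ((R0 + al) * (R0 + al))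
        = - (R0 + al) * (R0 * R0 - (al * al + s * s)) - (R0 + al) * (r * (R0 + al) - s) * (r * (R0 + al) - s)) by ring.
      rewrite hR0, hrR in E. lra. }
    assert (hImI : Im I = be * (1 + r * r)) by (unfold I, be; simpl; ring).
    assert (hI : (1 + r * r) * S <= Cmod I).
    { apply Cmod_ge_sq. apply Rmult_le_pos; nra. rewrite hReI, hImI.
      replace ((1 + r * r) * S * ((1 + r * r) * S)) with ((1 + r * r) * (1 + r * r) * (S * S)) by ring.
      rewrite hS, <- hq2. replace (R0 * (1 + r * r) * (R0 * (1 + r * r)) + be * (1 + r * r) * (be * (1 + r * r)))
        with ((1 + r * r) * (1 + r * r) * (R0 * R0 + be * be)) by ring. rewrite hR0. nra. }
    set (dl := Rabs (s - cu)).
    assert (hdl : 0 <= dl) by apply Rabs_pos.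
    assert (hcus : Rabs (cu - s) = dl) by (unfold dl; apply Rabs_minus_sym).
    assert (hDf : Cmod Df <= s * r * dl + r * r * dl * a + r * r * (a * kap)).
    { unfold Df. eapply Rle_trans. apply Cmod_add. unfold Csub at 1. 
      eapply Rle_trans. apply Rplus_le_compat_r. apply Cmod_add.
      rewrite Cmod_opp, !Cmod_mul, !Cmod_RtoC, !Cmod_conj, hz, hq.
      rewrite !Rabs_mult, hcus. rewrite (Rabs_pos_eq s), (Rabs_pos_eq r) by lra.
      pose proof (Cmod_ge0 Y). assert (0 <= r * r) by nra.
      assert (r*r*dl*Cmod p <= r*r*dl*a) by (apply Rmult_le_compat_l; [nra|lra]).
      assert (r*r*(1*Cmod Y) <= r*r*(a*kap)) by (apply Rmult_le_compat_l; lra). lra. }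
    assert (hL : Cmod (Cmul (RtoC s) (Cmul (Cconj z) (numf p s u d tau))) = s * Cmod (numf p s u d tau)).
    { rewrite !Cmod_mul, Cmod_RtoC, Cmod_conj, hz, Rabs_pos_eq by lra. ring. }
    assert (hR : s * Cmod I - Cmod Df <= Cmod (Cadd (Cmul (RtoC s) I) Df)).
    { pose proof (Cmod_rev_tri (Cmul (RtoC s) I) (Copp Df)) as HH.
      replace (Csub (Cmul (RtoC s) I) (Copp Df)) with (Cadd (Cmul (RtoC s) I) Df) in HH by cring.
      rewrite Cmod_opp in HH.
      rewrite Cmod_mul, Cmod_RtoC, Rabs_pos_eq in HH by lra. lra. }
    rewrite Key in hL. rewrite hsq.
    set (N := Cmod (numf p s u d tau)) in *.
    assert (hsN : s * ((1 + r * r) * S) - (s * r * dl + r * r * dl * a + r * r * (a * kap)) <= s * N).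
    { assert (s * ((1 + r * r) * S) <= s * Cmod I) by (apply Rmult_le_compat_l; lra). lra. }
    assert (hfr : a * (dl + kap) / s <= a * (dl + kap) / sig).
    { unfold Rdiv. apply Rmult_le_compat_l. apply Rmult_le_pos; lra. apply Rinv_le_contravar; lra. }
    assert (hN : (1 + r * r) * S - r * dl - r * r * (a * (dl + kap) / s) <= N).
    { apply Rmult_le_reg_l with (r := s). lra.
      replace (s * ((1 + r * r) * S - r * dl - r * r * (a * (dl + kap) / s))) with
        (s * ((1 + r * r) * S) - (s * r * dl + r * r * dl * a + r * r * (a * kap))) by (field; lra). lra. }
    assert (r <= 1 + r * r) by nra.
    assert (0 <= a * (dl + kap) / s) by (unfold Rdiv; apply Rmult_le_pos; [nra|left; apply Rinv_0_lt_compat; lra]).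
    fold dl. fold S.
    assert (r * dl <= (1 + r * r) * dl) by nra.
    assert (r * r * (a * (dl + kap) / s) <= (1 + r * r) * (a * (dl + kap) / sig)) by nra.
    nra.
Qed.

Lemma conj_mul_sq : forall t, Cmul t (Cconj t) = RtoC (sq t).
Proof. intros. unfold sq. rewrite Cmod_sq. apply Ceq; simpl; ring. Qed.

Lemma W_scale {H : HilbertSpace} (A : H -> H) : bounded_linear A -> forall x : H, x <> vzero ->
  numrange A (Cmul (RtoC (/ ns x)) (inner (A x) x)).
Proof.
  intros hA x Hx. exists (vscal (RtoC (/ vnorm x)) x). split. apply normalize_unit; auto.
  rewrite lin_scal, inner_scal_l, inner_scal_r by auto. pose proof (vnorm_pos x Hx).
  rewrite <- vnorm_sq. apply Ceq; simpl; field; lra.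
Qed.

Lemma setup_facts {H : HilbertSpace} (A : H -> H) (e : H) :
  bounded_linear A -> vnorm e = 1 ->
  let p := inner (A e) e in
  let g := vsub (A e) (vscal p e) in
  0 < vnorm g ->
  let s := vnorm g in
  let z0 := vscal (RtoC (/ s)) g in
  A e = vadd (vscal p e) (vscal (RtoC s) z0) /\ inner z0 e = C0 /\ inner e z0 = C0 /\ ns z0 = 1 /\ ns e = 1.
Proof.
  intros hA he p g hg s z0.
  assert (hne : ns e = 1) by (rewrite <- vnorm_sq, he; ring).
  assert (hge : inner g e = C0).
  { unfold g. rewrite inner_sub_l, inner_scal_l, inner_self_real, hne. unfold p. cring. }
  assert (F1 : A e = vadd (vscal p e) (vscal (RtoC s) z0)).
  { unfold z0. rewrite vscal_assoc. replace (Cmul (RtoC s) (RtoC (/ s))) with C1 by (apply Ceq; simpl; field; unfold s; lra).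
    rewrite vscal_C1. unfold g. rewrite vadd_comm. rewrite vadd_sub. auto. }
  assert (F2 : inner z0 e = C0) by (unfold z0; rewrite inner_scal_l, hge; cring).
  split; auto. split; auto. split. rewrite inner_conj_sym, F2; cring.
  split; auto. unfold z0, ns. rewrite inner_scal_l, inner_scal_r, inner_self_real. rewrite <- vnorm_sq. fold s.
  simpl. field. unfold s; lra.
Qed.

Lemma quad_identity {H : HilbertSpace} (A : H -> H) (e z0 : H) p s tau :
  bounded_linear A -> A e = vadd (vscal p e) (vscal (RtoC s) z0) -> inner z0 e = C0 -> inner e z0 = C0 ->
  ns z0 = 1 -> ns e = 1 ->
  inner (A (vadd e (vscal tau z0))) (vadd e (vscal tau z0)) =
    numf p s (inner (A z0) e) (inner (A z0) z0) tau /\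
  ns (vadd e (vscal tau z0)) = 1 + sq tau /\
  inner (A e) e = p /\ inner (A e) z0 = RtoC s.
Proof.
  intros hA F1 F2 F3 Hz He.
  assert (Iz : inner z0 z0 = C1) by (rewrite inner_self_real, Hz; cring).
  assert (Ie : inner e e = C1) by (rewrite inner_self_real, He; cring).
  assert (P1 : inner (A e) e = p) by (rewrite F1, inner_add_l, !inner_scal_l, Ie, F2; cring).
  assert (P2 : inner (A e) z0 = RtoC s) by (rewrite F1, inner_add_l, !inner_scal_l, Iz, F3; cring).
  split; [|split; [|split]]; auto.
  - rewrite lin_add, lin_scal by auto. rewrite !inner_add_l, !inner_add_r, !inner_scal_l, !inner_scal_r.
    rewrite P1, P2. unfold numf, gmap. rewrite <- conj_mul_sq. cring.
  - unfold ns. rewrite !inner_add_l, !inner_add_r, !inner_scal_l, !inner_scal_r, Iz, Ie, F2, F3.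
    unfold sq. rewrite Cmod_sq. simpl. ring.
Qed.

Lemma Y_identity {H : HilbertSpace} (A : H -> H) (e z0 : H) p s :
  A e = vadd (vscal p e) (vscal (RtoC s) z0) ->
  inner (A e) (A z0) = Cadd (Cmul p (Cconj (inner (A z0) e))) (Cmul (RtoC s) (Cconj (inner (A z0) z0))).
Proof. intros F1. rewrite F1, inner_add_l, !inner_scal_l. rewrite (inner_conj_sym (A z0) e), (inner_conj_sym (A z0) z0).
  apply Ceq; simpl; ring.
Qed.

Lemma opnorm_ns {H : HilbertSpace} (A : H -> H) a : bounded_linear A -> is_opnorm A a -> 0 <= a ->
  forall x, ns (A x) <= a * a * ns x.
Proof. intros hA hN ha x. pose proof (opnorm_bound A a hA hN x). rewrite <- !vnorm_sq.
  pose proof (vnorm_ge0 (A x)). pose proof (vnorm_ge0 x). nra. Qed.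

Lemma ns_e_tz {H : HilbertSpace} (e z0 : H) tau : ns e = 1 -> ns z0 = 1 -> inner e z0 = C0 ->
  ns (vadd e (vscal tau z0)) = 1 + sq tau.
Proof. intros He Hz Hez. rewrite ns_add, ns_scal, inner_scal_r, Hez, He, Hz. unfold sq. simpl. ring. Qed.

Lemma Y_bound {H : HilbertSpace} (A : H -> H) a kap (e z0 : H) :
  bounded_linear A -> is_opnorm A a -> 0 < a -> 0 < kap -> ns e = 1 -> ns z0 = 1 -> inner e z0 = C0 ->
  a * a - kap * kap <= ns (A e) -> Cmod (inner (A e) (A z0)) <= a * kap.
Proof.
  intros hA hN ha hk He Hz Hez HAe.
  set (Y := inner (A e) (A z0)).
  destruct (Req_dec (Cmod Y) 0) as [Y0|Y0]. rewrite Y0. nra.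
  pose proof (Cmod_ge0 Y). assert (hY : 0 < Cmod Y) by lra.
  set (rho := kap / (a * Cmod Y)).
  assert (hrho : 0 < rho) by (unfold rho; apply Rdiv_lt_0_compat; nra).
  set (tau := Cmul (RtoC rho) Y).
  pose proof (opnorm_ns A a hA hN ltac:(lra) (vadd e (vscal tau z0))) as Hb.
  rewrite ns_e_tz in Hb by auto.
  rewrite lin_add, lin_scal, ns_add, ns_scal, inner_scal_r in Hb by auto. fold Y in Hb.
  assert (Hsq : sq tau = rho * rho * (Cmod Y * Cmod Y)).
  { unfold sq, tau. rewrite Cmod_mul, Cmod_RtoC, Rabs_pos_eq by lra. ring. }
  assert (Hre : Re (Cmul (Cconj tau) Y) = rho * (Cmod Y * Cmod Y)).
  { unfold tau. rewrite Cmod_sq. simpl. ring. }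
  assert (Hns : 0 <= ns (A z0)) by apply ns_ge0.
  assert (Hcm : Cmod tau * Cmod tau = sq tau) by reflexivity.
  rewrite Hcm, Hsq, Hre in Hb.
  assert (E : rho * Cmod Y = kap / a) by (unfold rho; field; split; lra).
  assert (Hm : 2 * rho * (Cmod Y * Cmod Y) <= kap * kap + a * a * (rho * rho * (Cmod Y * Cmod Y))).
  { assert (0 <= rho * rho * (Cmod Y * Cmod Y) * ns (A z0)) by (apply Rmult_le_pos; nra). nra. }
  replace (2 * rho * (Cmod Y * Cmod Y)) with (2 * (kap / a) * Cmod Y) in Hm by (rewrite <- E; ring).
  replace (a * a * (rho * rho * (Cmod Y * Cmod Y))) with (a * a * ((kap / a) * (kap / a))) in Hm by (rewrite <- E; ring).
  replace (a * a * (kap / a * (kap / a))) with (kap * kap) in Hm by (field; lra).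
  assert (Hq : kap / a * Cmod Y <= kap * kap) by lra. apply Rmult_le_reg_l with (r := kap / a). apply Rdiv_lt_0_compat; lra.
  assert (E2 : kap / a * (a * kap) = kap * kap) by (field; lra). lra.
Qed.

Lemma ns_g {H : HilbertSpace} (A : H -> H) (e : H) : ns e = 1 ->
  ns (vsub (A e) (vscal (inner (A e) e) e)) = ns (A e) - Cmod (inner (A e) e) * Cmod (inner (A e) e).
Proof. intros He. unfold vsub. rewrite vopp_scal, vscal_assoc, ns_add, ns_scal, inner_scal_r, He.
  rewrite Cmod_mul, Cmod_opp, Cmod_C1, !Rmult_1_l, Cmod_sq. simpl. ring. Qed.

Lemma ns1_vnorm {H : HilbertSpace} : forall x : H, ns x = 1 -> vnorm x = 1.
Proof. intros x Hx. unfold vnorm. change (Re (inner x x)) with (ns x). rewrite Hx. apply sqrt_1. Qed.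

Lemma caseB {H : HilbertSpace} (A : H -> H) a w lam :
  bounded_linear A -> is_opnorm A a -> 0 <= w -> w < a ->
  (forall x, vnorm x = 1 -> Cmod (inner (A x) x) <= w) ->
  maxnumrange A a lam -> boundary (numrange A) lam -> False.
Proof.
  intros hA hN hw hwa hbd [xs [hu [hc1 hc2]]] hbdry.
  assert (ha : 0 < a) by lra.
  set (gam := a - w). assert (hg : 0 < gam <= a) by (unfold gam; lra).
  set (sig := gam / 2). set (kap := gam * gam / (16 * a)).
  assert (hk : 0 < kap) by (unfold kap; apply Rdiv_lt_0_compat; nra).
  assert (hka : kap <= gam / 16).
  { unfold kap. apply Rmult_le_reg_r with (r := 16 * a). lra. unfold Rdiv.
    replace (gam * gam * / (16 * a) * (16 * a)) with (gam * gam) by (field; lra). nra. }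
  set (rho := kap * Rmin 1 (kap / (20 * a)) / 2).
  assert (hrho : 0 < rho).
  { unfold rho. assert (0 < Rmin 1 (kap / (20 * a))). apply Rmin_glb_lt. lra. apply Rdiv_lt_0_compat; lra.
    nra. }
  set (h := kap * kap / (2 * a)).
  assert (hh : 0 < h) by (unfold h; apply Rdiv_lt_0_compat; nra).
  destruct (hc1 h hh) as [N1 HN1]. destruct (hc2 (rho / 2)) as [N2 HN2]. lra.
  set (n := max N1 N2). specialize (HN1 n ltac:(lia)). specialize (HN2 n ltac:(lia)).
  unfold Rdist in HN1, HN2. rewrite Rminus_0_r, Rabs_pos_eq in HN2 by apply Cmod_ge0.
  set (e := xs n) in *. specialize (hu n). fold e in hu.
  set (p := inner (A e) e) in *.
  assert (he1 : ns e = 1) by (rewrite <- vnorm_sq, hu; ring).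
  assert (hAe : a * a - kap * kap <= ns (A e)).
  { rewrite <- vnorm_sq. assert (a - h <= vnorm (A e)) by (apply Rabs_def2 in HN1; lra).
    assert (0 <= a - h).
    { assert (h <= a). { unfold h. apply Rmult_le_reg_r with (r := 2 * a). lra. unfold Rdiv.
      replace (kap * kap * / (2 * a) * (2 * a)) with (kap * kap) by (field; lra). nra. } lra. }
    assert ((a - h) * (a - h) <= vnorm (A e) * vnorm (A e)) by nra.
    assert (a * a - kap * kap <= (a - h) * (a - h)).
    { replace ((a - h) * (a - h)) with (a * a - kap * kap + h * h) by (unfold h; field; lra). nra. }
    lra. }
  assert (hAea : ns (A e) <= a * a) by (pose proof (opnorm_ns A a hA hN ltac:(lra) e); rewrite he1 in H0; lra).
  assert (hpw : Cmod p <= w) by (apply hbd; auto).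
  pose proof (Cmod_ge0 p) as hp0.
  set (g := vsub (A e) (vscal p e)).
  assert (hns_g : ns g = ns (A e) - Cmod p * Cmod p) by (unfold g, p; apply ns_g; auto).
  assert (hsig : sig * sig <= ns g).
  { rewrite hns_g. unfold sig.
    assert (w * w + gam * gam / 4 + kap * kap <= a * a).
    { assert (kap * kap <= gam * gam / 256) by (pose proof hk; nra). unfold gam in *. nra. }
    nra. }
  assert (hs : sig <= vnorm g).
  { apply sq_le_sqrt. unfold sig; lra. auto. }
  assert (hsig0 : 0 < sig) by (unfold sig; lra).
  assert (hg0 : 0 < vnorm g) by lra.
  destruct (setup_facts A e hA hu hg0) as [F1 [F2 [F3 [Fz Fe]]]].
  set (s := vnorm g) in *. set (z0 := vscal (RtoC (/ s)) g) in *.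
  set (u := inner (A z0) e). set (d := inner (A z0) z0).
  assert (hsa : s <= a).
  { assert (s * s <= a * a) by (unfold s; rewrite vnorm_sq; nra). unfold s in *. pose proof (vnorm_ge0 g). nra. }
  assert (hz1 : vnorm z0 = 1) by (apply ns1_vnorm; auto).
  assert (hua : Cmod u <= a).
  { unfold u. eapply Rle_trans. apply cauchy_schwarz. rewrite hu, Rmult_1_r. 
    pose proof (opnorm_bound A a hA hN z0). rewrite hz1 in H0. lra. }
  assert (hda : Cmod d <= a).
  { unfold d. eapply Rle_trans. apply cauchy_schwarz. rewrite hz1, Rmult_1_r. 
    pose proof (opnorm_bound A a hA hN z0). rewrite hz1 in H0. lra. }
  assert (hY : Cmod (Cadd (Cmul p (Cconj u)) (Cmul (RtoC s) (Cconj d))) <= a * kap).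
  { unfold u, d. rewrite <- (Y_identity A e z0 p s F1). apply Y_bound; auto. }
  assert (hQ : forall tau, numrange A (Cmul (RtoC (/ (1 + sq tau))) (numf p s u d tau))).
  { intros tau. destruct (quad_identity A e z0 p s tau hA F1 F2 F3 Fz Fe) as [Q1 [Q2 _]].
    assert (hx : vadd e (vscal tau z0) <> vzero).
    { intro E0. rewrite E0 in Q2. unfold ns in Q2. rewrite inner_zero_l in Q2. simpl in Q2. pose proof (sq_ge0 tau). lra. }
    pose proof (W_scale A hA _ hx). rewrite Q1, Q2 in H0. exact H0. }
  destruct (Rlt_le_dec (Rabs (s - Cmod u)) kap) as [Hdeg|Hnd].
  -
    destruct (degen_C a kap sig s p u d ha hsig0 hs ltac:(lra) ltac:(lra) hY) as [tau Ht].
    destruct (hQ tau) as [x [Hx Hv]].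
    pose proof (hbd x Hx). rewrite <- Hv in H0.
    rewrite Cmod_mul, Cmod_RtoC in H0. pose proof (sq_ge0 tau).
    rewrite Rabs_pos_eq in H0 by (left; apply Rinv_0_lt_compat; lra).
    assert (Hm : sqrt (Cmod p * Cmod p + s * s) - Rabs (s - Cmod u) - a * (Rabs (s - Cmod u) + kap) / sig <= w).
    { apply Rmult_le_reg_l with (r := 1 + sq tau). lra. eapply Rle_trans. apply Ht.
      apply Rmult_le_reg_l with (r := / (1 + sq tau)). apply Rinv_0_lt_compat; lra.
      rewrite <- Rmult_assoc, Rinv_l, Rmult_1_l by lra. auto. }
    assert (HS : a - kap <= sqrt (Cmod p * Cmod p + s * s)).
    { apply sq_le_sqrt. lra. unfold s. rewrite vnorm_sq. nra. }
    assert (Hfr : a * (Rabs (s - Cmod u) + kap) / sig <= gam / 4).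
    { unfold sig. apply Rle_trans with (a * (2 * kap) / (gam / 2)).
      unfold Rdiv. apply Rmult_le_compat_r. left; apply Rinv_0_lt_compat; lra. apply Rmult_le_compat_l; lra.
      unfold kap. apply Req_le. field. lra. }
    unfold gam in *. lra.
  -
    destruct (hbdry (rho / 2)) as [_ [z [Hz Hzl]]]. lra.
    apply Hz.
    set (zeta := Csub z p).
    assert (Hzeta : Cmod zeta <= rho).
    { unfold zeta. pose proof (Cmod_sub_tri z p lam). rewrite Cmod_sub_sym with (z := lam) in H0. unfold p in *. lra. }
    destruct (interior_C a s u d p kap zeta ha ltac:(split; [unfold s; apply vnorm_ge0|lra]) hua hda ltac:(lra)
                ltac:(lra) Hnd Hzeta) as [t Ht].
    specialize (hQ t). replace z with (Cmul (RtoC (/ (1 + sq t))) (numf p s u d t)). auto.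
    pose proof (sq_ge0 t).
    unfold numf. unfold zeta in Ht. set (G := gmap s u t) in *. set (m := sq t) in *.
    set (k := / (1 + m)). assert (hk1 : k * (1 + m) = 1) by (unfold k; field; lra).
    clearbody k G m. assert (HR := f_equal Re Ht). assert (HI := f_equal Im Ht). simpl in HR, HI.
    apply Ceq; simpl; nsatz.
Qed.

Lemma valadh_ball : forall (un : nat -> R) l, ValAdh un l ->
  forall e N, 0 < e -> exists p, (N <= p)%nat /\ Rabs (un p - l) < e.
Proof.
  intros un l Hv e N He. destruct (Hv (fun y => Rabs (y - l) < e) N) as [p Hp]; eauto.
  exists (mkposreal e He). intros y Hy. exact Hy.
Qed.

Lemma abs_bound : forall x b, Rabs x <= b -> -b <= x <= b.
Proof. intros. pose proof (Rle_abs x). pose proof (Rle_abs (- x)). rewrite Rabs_Ropp in H1. lra. Qed.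

Lemma cluster_C : forall (q : nat -> C) a, (forall k, Cmod (q k) <= a) ->
  exists mu, forall e N, 0 < e -> exists k, (N <= k)%nat /\ Cmod (Csub (q k) mu) < e.
Proof.
  intros q a Hq.
  assert (HR : forall k, -a <= Re (q k) <= a).
  { intros k. apply abs_bound. eapply Rle_trans. apply Re_le_Cmod. auto. }
  assert (HI : forall k, -a <= Im (q k) <= a).
  { intros k. apply abs_bound. eapply Rle_trans. apply Im_le_Cmod. auto. }
  destruct (Bolzano_Weierstrass (fun k => Re (q k)) (fun c => -a <= c <= a) (compact_P3 (-a) a) HR) as [c Hc].
  assert (Hphi : forall j : nat, exists k, (j <= k)%nat /\ Rabs (Re (q k) - c) < / (INR j + 1)).
  { intros j. apply (valadh_ball _ _ Hc). apply inv_pos_n. }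
  set (phi := fun j => proj1_sig (constructive_indefinite_description _ (Hphi j))).
  assert (Hphi2 : forall j, (j <= phi j)%nat /\ Rabs (Re (q (phi j)) - c) < / (INR j + 1)).
  { intros j. unfold phi. destruct (constructive_indefinite_description _ _). simpl. auto. }
  destruct (Bolzano_Weierstrass (fun j => Im (q (phi j))) (fun c => -a <= c <= a) (compact_P3 (-a) a)
             (fun j => HI (phi j))) as [d Hd].
  exists (mkC c d). intros e N He.
  destruct (inv_small (e / 2)) as [M HM]. lra.
  destruct (valadh_ball _ _ Hd (e / 2) (max N M)) as [j [Hj Hjd]]. lra.
  exists (phi j). destruct (Hphi2 j) as [Hj1 Hj2]. split. lia.
  specialize (HM j ltac:(lia)).
  apply Rle_lt_trans with (Rabs (Re (q (phi j)) - c) + Rabs (Im (q (phi j)) - d)); [|lra].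
  apply Cmod_le_sq. pose proof (Rabs_pos (Re (q (phi j)) - c)); pose proof (Rabs_pos (Im (q (phi j)) - d)); lra.
  simpl. pose proof (Rabs_pos (Re (q (phi j)) - c)); pose proof (Rabs_pos (Im (q (phi j)) - d)).
  replace ((Re (q (phi j)) + - c) * (Re (q (phi j)) + - c) + (Im (q (phi j)) + - d) * (Im (q (phi j)) + - d)) with
    (Rabs (Re (q (phi j)) - c) * Rabs (Re (q (phi j)) - c) + Rabs (Im (q (phi j)) - d) * Rabs (Im (q (phi j)) - d))
    by (rewrite !Rabs_sq; ring). nra.
Qed.

Lemma caseA {H : HilbertSpace} (A : H -> H) a :
  bounded_linear A -> is_opnorm A a -> 0 <= a ->
  (forall eta, 0 < eta -> exists x, vnorm x = 1 /\ a - eta < Cmod (inner (A x) x)) ->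
  normaloid A a.
Proof.
  intros hA hN ha hsup.
  set (xs := fun k : nat => proj1_sig (constructive_indefinite_description _ (hsup (/ (INR k + 1)) (inv_pos_n k)))).
  assert (Hxs : forall k, vnorm (xs k) = 1 /\ a - / (INR k + 1) < Cmod (inner (A (xs k)) (xs k))).
  { intros k. unfold xs. destruct (constructive_indefinite_description _ _). simpl. auto. }
  set (q := fun k => inner (A (xs k)) (xs k)).
  assert (Hq : forall k, Cmod (q k) <= a) by (intros k; apply (numrange_bound A a hN); apply Hxs).
  destruct (cluster_C q a Hq) as [mu Hmu].
  assert (Hmod : Cmod mu = a).
  { apply Rle_antisym.
    - apply Rnot_lt_le. intros Hlt. destruct (Hmu (Cmod mu - a) O) as [k [_ Hk]]. lra.
      pose proof (Cmod_rev_tri mu (q k)). rewrite Cmod_sub_sym in Hk. specialize (Hq k). lra.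
    - apply Rnot_lt_le. intros Hlt. destruct (inv_small ((a - Cmod mu) / 2)) as [M HM]. lra.
      destruct (Hmu ((a - Cmod mu) / 2) M) as [k [Hk1 Hk2]]. lra.
      specialize (HM k Hk1). destruct (Hxs k) as [_ Hk3]. change (inner (A (xs k)) (xs k)) with (q k) in Hk3.
      pose proof (Cmod_rev_tri (q k) mu). lra. }
  exists mu. split; auto.
  apply approx_eig_spectrum. intros e He.
  assert (Hpos : 0 < e * e / (2 * a + 1)) by (apply Rdiv_lt_0_compat; nra).
  destruct (Hmu (e * e / (2 * a + 1)) O Hpos) as [k [_ Hk]].
  exists (xs k). destruct (Hxs k) as [Hx _]. split; auto.
  assert (HT : ns (Tm A mu (xs k)) < e * e).
  2: { apply Rnot_le_lt. intro Hge. rewrite <- vnorm_sq in HT. pose proof (vnorm_ge0 (Tm A mu (xs k))). nra. }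
  unfold Tm, vsub. rewrite vopp_scal, vscal_assoc, ns_add, ns_scal, inner_scal_r.
  assert (Hns : ns (xs k) = 1) by (rewrite <- vnorm_sq, Hx; ring). rewrite Hns.
  rewrite Cmod_mul, Cmod_opp, Cmod_C1, Rmult_1_l, Hmod. fold (q k).
  assert (HA : ns (A (xs k)) <= a * a) by (rewrite <- vnorm_sq; pose proof (opnorm_unit A a hN _ Hx); pose proof (vnorm_ge0 (A (xs k))); nra).
  assert (HRe : a * a - a * Cmod (Csub (q k) mu) <= Re (Cmul (Cconj mu) (q k))).
  { replace (Cmul (Cconj mu) (q k)) with (Cadd (Cmul (Cconj mu) mu) (Cmul (Cconj mu) (Csub (q k) mu))) by cring.
    simpl. pose proof (Cmod_sq mu). rewrite Hmod in H0.
    pose proof (Re_le_Cmod' (Copp (Cmul (Cconj mu) (Csub (q k) mu)))).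
    rewrite Cmod_opp, Cmod_mul, Cmod_conj, Hmod in H1. simpl in H1. nra. }
  assert (HRe2 : Re (Cmul (Cconj (Cmul (Copp C1) mu)) (q k)) = - Re (Cmul (Cconj mu) (q k))) by (simpl; ring).
  rewrite HRe2.
  assert (a * Cmod (Csub (q k) mu) < e * e / 2).
  { apply Rle_lt_trans with (a * (e * e / (2 * a + 1))). apply Rmult_le_compat_l; lra.
    unfold Rdiv. rewrite <- Rmult_assoc. apply Rmult_lt_reg_r with (r := 2 * a + 1). lra.
    rewrite Rmult_assoc, Rinv_l by lra. replace (e * e * / 2 * (2 * a + 1)) with (e * e * a + e * e / 2) by field.
    nra. }
  nra.
Qed.

Theorem theorem2 (H : HilbertSpace) (A : H -> H) (nA : R) :
  (exists x : H, x <> vzero) ->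
  bounded_linear A ->
  is_opnorm A nA ->
  ((exists lam, maxnumrange A nA lam /\ boundary (numrange A) lam) <-> normaloid A nA).
Proof.
  intros hne hA hN. pose proof (opnorm_ge0 A nA hne hN) as ha. split.
  - intros [lam [hW hB]].
    destruct (classic (forall eta, 0 < eta -> exists x, vnorm x = 1 /\ nA - eta < Cmod (inner (A x) x))) as [Hs|Hn].
    + apply caseA; auto.
    + exfalso. apply not_all_ex_not in Hn. destruct Hn as [eta Hn]. apply imply_to_and in Hn.
      destruct Hn as [Heta Hn].
      assert (Hb : forall x, vnorm x = 1 -> Cmod (inner (A x) x) <= nA - eta).
      { intros x Hx. apply Rnot_lt_le. intro Hlt. apply Hn. exists x. auto. }
      destruct (unit_exists hne) as [e He]. pose proof (Hb e He). pose proof (Cmod_ge0 (inner (A e) e)).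
      apply (caseB A nA (nA - eta) lam); auto; lra.
  - intros [lam [hsp hl]]. exists lam.
    apply approx_W0_bd; auto. apply (spectrum_approx A nA); auto.
Qed.
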